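(* Let $m$ be an integer. (i) If $m=N_2(1+(x-1)^5h(x))$ for some $h\in\mathbb Z[x]$ with $3\nmid h(1)$, then there is $F\in\mathbb Z[x]$ with $F(1)=N_1(F)=N_3(F)=3$, $N_2(F)=3m$ and $M_{27}(F)=3^4m$. (ii) If $m=N_3(1+(x-1)^5h(x))$ for some $h\in\mathbb Z[x]$ with $3\nmid h(1)$, then there is $F\in\mathbb Z[x]$ with $F(1)=N_1(F)=N_2(F)=3$, $N_3(F)=3m$ and $M_{27}(F)=3^4m$.
   Context: $M_{27}(F)=\prod_{z^{27}=1}F(z)$. For $k\geq1$, $\omega_k=e^{2\pi i/3^k}$ and $N_k(F)=\prod_{1\leq \ell\leq 3^k,\ 3\nmid \ell}F(\omega_k^\ell)$. *)

(* Defs.v *)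
From HB Require Import structures.
From mathcomp Require Import all_boot all_order all_algebra all_field.
Set Implicit Arguments. Unset Strict Implicit. Unset Printing Implicit Defensive.
Import Order.TTheory GRing.Theory Num.Theory.
Local Open Scope ring_scope.

(* omega k = e^{2 pi i / 3^k} inside the algebraic complex numbers algC:
   n.-root (-1) is the n-th root of -1 of minimal non-negative argument,
   i.e. e^{i pi / n}; its square is e^{2 pi i / n}. *)
Definition omega (k : nat) : algC := ((3 ^ k)%N.-root (-1)) ^+ 2.

Definition evalZ (F : {poly int}) (z : algC) : algC :=
  (map_poly (fun c : int => c%:~R) F).[z].

Definition Nk (k : nat) (F : {poly int}) : algC :=
  \prod_(1 <= l < (3 ^ k).+1 | ~~ (3 %| l)%N) evalZ F (omega k ^+ l).

(* M_27(F) = prod_{z^27 = 1} F(z); the 27th roots of unity are exactly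
   omega_3^l for 0 <= l < 27. *)
Definition M27 (F : {poly int}) : algC :=
  \prod_(l < 27) evalZ F (omega 3 ^+ l).

(* Main.v *)
Require Import Defs.
From HB Require Import structures.
From Stdlib Require Import ZArith.
From mathcomp Require Import all_boot all_order all_algebra all_field.
From mathcomp Require Import ssrZ ring zify.
Set Implicit Arguments. Unset Strict Implicit. Unset Printing Implicit Defensive.
Import Order.TTheory GRing.Theory Num.Theory.
Local Open Scope ring_scope.


Definition ZC (c : Z) : algC := (int_of_Z c)%:~R.
Lemma ZC_add a b : ZC (Z.add a b) = ZC a + ZC b.
Proof. by rewrite /ZC -rmorphD /= -(rmorphD int_of_Z). Qed.
Lemma ZC_mul a b : ZC (Z.mul a b) = ZC a * ZC b.
Proof. by rewrite /ZC -rmorphM /= -(rmorphM int_of_Z). Qed.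
Lemma ZCz0 : ZC Z0 = 0. Proof. by []. Qed.
Lemma ZCz1 : ZC (Zpos xH) = 1. Proof. by []. Qed.
Lemma ZCzN1 : ZC (Zneg xH) = -1. Proof. by []. Qed.

Fixpoint padd (p q : seq Z) : seq Z :=
  match p, q with
  | [::], _ => q
  | _, [::] => p
  | a :: p', b :: q' => Z.add a b :: padd p' q'
  end.
Definition psc (c : Z) (p : seq Z) := map (Z.mul c) p.
Definition pmul (p q : seq Z) : seq Z :=
  foldr (fun a acc => padd (psc a q) (Z0 :: acc)) [::] p.
Definition pX (n : nat) : seq Z := rcons (nseq n Z0) (Zpos xH).

Definition ev (p : seq Z) (x : algC) : algC := foldr (fun c acc => ZC c + x * acc) 0 p.

Lemma ev_nil x : ev [::] x = 0. Proof. by []. Qed.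
Lemma ev_cons c p x : ev (c :: p) x = ZC c + x * ev p x. Proof. by []. Qed.
Lemma ev_add p q x : ev (padd p q) x = ev p x + ev q x.
Proof.
elim: p q => [|a p IH] [|b q] /=; rewrite ?add0r ?addr0 //.
by rewrite IH ZC_add mulrDr addrACA.
Qed.
Lemma ev_sc c p x : ev (psc c p) x = ZC c * ev p x.
Proof. elim: p => [|a p IH] /=; first by rewrite mulr0. by rewrite IH ZC_mul mulrDr mulrCA. Qed.
Lemma ev_mul p q x : ev (pmul p q) x = ev p x * ev q x.
Proof.
elim: p => [|a p IH] /=; first by rewrite mul0r.
by rewrite ev_add ev_sc /= IH ZCz0 add0r mulrDl mulrA.
Qed.
Lemma ev_cat p q x : ev (p ++ q) x = ev p x + x ^+ size p * ev q x.
Proof. elim: p => [|a p IH] /=; first by rewrite add0r mul1r. by rewrite IH mulrDr addrA exprS mulrA. Qed.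
Lemma ev_nseq0 n x : ev (nseq n Z0) x = 0.
Proof. by elim: n => //= n ->; rewrite mulr0 addr0. Qed.
Lemma ev_pX n x : ev (pX n) x = x ^+ n.
Proof. by rewrite /pX -cats1 ev_cat ev_nseq0 size_nseq /= mulr0 addr0 ZCz1 add0r mulr1. Qed.
Lemma ev_all0 p x : all (fun c => c == Z0) p -> ev p x = 0.
Proof. elim: p => //= a p IH /andP[/eqP -> /IH ->]; by rewrite mulr0 addr0. Qed.

Section Red.
Variable M : nat.
Fixpoint fold3 (n : nat) (p : seq Z) : seq Z :=
  match n with
  | 0 => p
  | n'.+1 => if (size p <= 3 * M)%N then p else fold3 n' (padd (take (3 * M)%N p) (drop (3 * M)%N p))
  end.
Definition red (p : seq Z) : seq Z :=
  let p1 := fold3 (size p) p in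
  let d := drop (2 * M)%N p1 in
  padd (take (2 * M)%N p1) (padd (psc (Zneg xH) d) (psc (Zneg xH) (nseq M Z0 ++ d))).
Variable x : algC.
Hypothesis Hx : 1 + x ^+ M + x ^+ (2 * M)%N = 0.
Lemma x3M : x ^+ (3 * M)%N = 1.
Proof.
apply/eqP; rewrite -subr_eq0.
have -> : x ^+ (3 * M)%N - 1 = (x ^+ M - 1) * (1 + x ^+ M + x ^+ (2 * M)%N).
  by rewrite (mulnC 3) (mulnC 2) !exprM; ring.
by rewrite Hx mulr0.
Qed.
Lemma ev_fold3 n p : ev (fold3 n p) x = ev p x.
Proof.
elim: n p => //= n IH p; case: ifP => // hs; rewrite IH ev_add.
rewrite -{3}(cat_take_drop (3 * M)%N p) ev_cat size_take.
by rewrite ifT ?x3M ?mul1r // ltnNge hs.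
Qed.
Lemma ev_red p : ev (red p) x = ev p x.
Proof.
rewrite -[RHS](ev_fold3 (size p)) /red.
set q := fold3 _ p.
rewrite !ev_add !ev_sc ev_cat ev_nseq0 size_nseq add0r.
rewrite -[in RHS](cat_take_drop (2 * M)%N q) ev_cat size_take.
case: ltnP => h.
  have -> : x ^+ (2 * M)%N = - 1 - x ^+ M by apply: (addrI (1 + x ^+ M)); rewrite Hx; ring.
  rewrite /ZC /=; ring.
rewrite drop_oversize // ev_nil /ZC /=; ring.
Qed.
End Red.

Definition eqm (M : nat) (p q : seq Z) : bool :=
  all (fun c => c == Z0) (red M (padd p (psc (Zneg xH) q))).
Lemma eqmP M p q x : 1 + x ^+ M + x ^+ (2 * M)%N = 0 -> eqm M p q -> ev p x = ev q x.
Proof.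
move=> Hx /(ev_all0 x); rewrite ev_red // ev_add ev_sc ZCzN1 => /eqP.
by rewrite mulN1r subr_eq0 => /eqP.
Qed.
Ltac realt := repeat first [assumption | apply: rpred0 | apply: rpred1 | apply: rpred_nat | apply: rpredM | apply: rpredB | apply: rpredD | rewrite rpredN | rewrite rpredV | apply: rpredX].

Lemma cube_root_Re (w : algC) : `|w| = 1 -> w != 1 -> 0 <= 'Im w ->
  'Re w < 'Re (3.-root w).
Proof.
move=> nw w1 Iw.
set y := 3.-root w.
have y3 : y ^+ 3 = w by rewrite rootCK.
have ny : `|y| = 1.
  by apply/eqP; rewrite -(@pexpr_eq1 _ _ 3) // -normrX y3 nw.
have Ib : 0 <= 'Im y by apply: Im_rootC_ge0.
have max v : v ^+ 3 = w -> 0 <= 'Im v -> 'Re v <= 'Re y.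
  by move=> v3 Iv; apply: rootC_Re_max.
have ra := Creal_Re y; have rb := Creal_Im y.
have Hy := Crect y.
move: ra rb Hy max Ib; set a := 'Re y; set b := 'Im y; move=> ra rb Hy max Ib.
have ab1 : a ^+ 2 + b ^+ 2 = 1 by rewrite -normC2_Re_Im ny expr1n.
have i2 : 'i ^+ 2 = -1 :> algC := sqrCi _.
have w_eq : w = (a ^+ 3 - 3 * a * b ^+ 2) + 'i * (3 * a ^+ 2 * b - b ^+ 3).
  rewrite -y3 Hy.
  have -> : (a + 'i * b) ^+ 3 = a ^+ 3 + 3 * a ^+ 2 * b * 'i + 3 * a * b ^+ 2 * ('i ^+ 2)
     + b ^+ 3 * 'i * ('i ^+ 2) by ring.
  rewrite i2; ring.
have rRe : a ^+ 3 - 3 * a * b ^+ 2 \is Num.real by rewrite rpredB ?rpredM ?rpredX ?rpred_nat.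
have rIm : 3 * a ^+ 2 * b - b ^+ 3 \is Num.real by rewrite rpredB ?rpredM ?rpredX ?rpred_nat.
have Rew : 'Re w = a ^+ 3 - 3 * a * b ^+ 2 by rewrite w_eq Re_rect.
have Imw : 'Im w = 3 * a ^+ 2 * b - b ^+ 3 by rewrite w_eq Im_rect.
pose s : algC := sqrtC 3.
have s0 : 0 <= s by rewrite /s sqrtC_ge0 ler0n.
have s2 : s ^+ 2 = 3 by rewrite /s sqrtCK.
have rs : s \is Num.real by apply: ger0_real.
pose v := y * ((-1 - 'i * s) / 2).
have v3 : v ^+ 3 = w.
  rewrite /v exprMn y3.
  have -> : ((-1 - 'i * s) / 2) ^+ 3 = - (1 + 3 * 'i * s + 3 * ('i ^+ 2) * s ^+ 2
      + 'i * ('i ^+ 2) * s * s ^+ 2) / 8.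
    by rewrite exprMn exprVn; congr (_ * _); [ring | rewrite -natrX].
  rewrite i2 s2.
  have -> : - (1 + 3 * 'i * s + 3 * -1 * 3 + 'i * -1 * s * 3) / 8 = 1 :> algC.
    have -> : - (1 + 3 * 'i * s + 3 * -1 * 3 + 'i * -1 * s * 3) = 8 :> algC by ring.
    by rewrite divff // pnatr_eq0.
  by rewrite mulr1.
have v_eq : v = (- a + b * s) / 2 + 'i * ((- a * s - b) / 2).
  rewrite /v Hy.
  have -> : (a + 'i * b) * ((-1 - 'i * s) / 2) = (- a - 'i * (a * s) - 'i * b - ('i ^+ 2) * b * s) / 2 by ring.
  rewrite i2; ring.
have r2 : (2 : algC)^-1 \is Num.real by rewrite rpredV rpred_nat.
have rvRe : (- a + b * s) / 2 \is Num.real by realt.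
have rvIm : (- a * s - b) / 2 \is Num.real by realt.
have Rev : 'Re v = (- a + b * s) / 2 by rewrite v_eq (Re_rect rvRe rvIm).
have Imv : 'Im v = (- a * s - b) / 2 by rewrite v_eq (Im_rect rvRe rvIm).
have bpos : 0 < b.
  rewrite lt_def Ib andbT; apply/negP => /eqP b0.
  have e : a ^+ 2 = 1 by rewrite -ab1 b0 expr0n /= addr0.
  have : (a - 1) * (a + 1) = 0.
    have -> : (a - 1) * (a + 1) = a ^+ 2 - 1 by ring.
    by rewrite e subrr.
  move/eqP; rewrite mulf_eq0 => /orP[|] /eqP ha.
    have a1 : a = 1 by apply/eqP; rewrite -subr_eq0 ha.
    move: w1; rewrite -y3 Hy a1 b0 mulr0 addr0 expr1n eqxx //.
  have a1 : a = -1 by apply/eqP; rewrite -subr_eq0 opprK ha.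
  have := max v v3; rewrite Imv Rev a1 b0.
  rewrite opprK mul0r addr0 subr0 mul1r.
  move/(_ (divr_ge0 s0 (ler0n _ 2))) => h.
  have h2 : (0:algC) < 1 / 2 by rewrite divr_gt0 ?ltr01 ?ltr0n.
  by have := lt_le_trans h2 h; rewrite oppr_gt0 ltr10.
have spos : 0 < s.
  rewrite lt_def s0 andbT; apply/eqP => s00.
  by move: s2; rewrite s00 expr0n /= => /eqP; rewrite eq_sym pnatr_eq0.
have bs : 0 < b * s by rewrite mulr_gt0.
have r0 : (0:algC) \is Num.real := real0 _.
case: (real_leP ra r0) => [a0|apos].
  exfalso.
  have h1 : 0 <= 3 * a ^+ 2 - b ^+ 2.
    have : 3 * a ^+ 2 * b - b ^+ 3 = b * (3 * a ^+ 2 - b ^+ 2) by ring.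
    by move: Iw; rewrite Imw => + e; rewrite e pmulr_rge0.
  have nas : 0 <= - a * s by rewrite mulr_ge0 // oppr_ge0.
  have hb : b <= - a * s.
    rewrite -(ler_sqr (ltW bpos) nas).
    have -> : (- a * s) ^+ 2 = 3 * a ^+ 2 by rewrite exprMn s2 sqrrN mulrC.
    by rewrite -subr_ge0.
  have Iv : 0 <= 'Im v by rewrite Imv divr_ge0 ?ler0n // subr_ge0.
  have := max v v3 Iv; rewrite Rev ler_pdivrMr ?ltr0n // -subr_ge0.
  have -> : a * 2 - (- a + b * s) = 3 * a + - (b * s) by ring.
  have h3 : 3 * a <= 0 by rewrite mulr_ge0_le0 ?ler0n.
  move=> h4; have h5 : - (b * s) < 0 by rewrite oppr_lt0.
  by have := ltr_wnDl h3 h5; move/lt_le_trans/(_ h4); rewrite ltxx.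
rewrite Rew -subr_gt0.
have -> : a - (a ^+ 3 - 3 * a * b ^+ 2) = 4 * a * b ^+ 2 + a * (1 - (a ^+ 2 + b ^+ 2)) by ring.
by rewrite ab1 subrr mulr0 addr0 !mulr_gt0 ?exprn_gt0 ?ltr0n.
Qed.

Lemma omega_prim k : (0 < k)%N -> (3 ^ k).-primitive_root (omega k).
Proof.
move=> k0.
have N0 : (0 < 3 ^ k)%N by rewrite expn_gt0.
have N1 : (1 < 3 ^ k)%N by rewrite -{1}(expn0 3) ltn_exp2l.
set r := (3 ^ k).-root (-1 : algC).
have rN : r ^+ (3 ^ k) = -1 by rewrite rootCK.
have wN : omega k ^+ (3 ^ k) = 1 by rewrite /omega -/r -exprM mulnC exprM rN sqrrN expr1n.
have [m pm mN] := prim_order_exists N0 wN.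
case/(@dvdn_pfactor 3 m k isT): mN => i ik mE.
case: (ltngtP i k) => [ik'|h|ie]; last by move: pm; rewrite mE ie.
  2: by rewrite ltnNge ik in h.
exfalso.
set M := (3 ^ k.-1)%N.
have NM : (3 ^ k = 3 * M)%N by rewrite /M -expnS prednK.
have M0 : (0 < M)%N by rewrite expn_gt0.
have wM : omega k ^+ M = 1.
  have : (m %| M)%N by rewrite mE /M dvdn_exp2l // -ltnS prednK.
  rewrite (prim_order_dvd pm) => /eqP.
  by [].
have rM : r ^+ M = -1.
  have wM' : (r ^+ 2) ^+ M = 1 := wM.
  have e : r ^+ (3 ^ k) = r ^+ M * (r ^+ 2) ^+ M.
    by rewrite -exprM -exprD NM; congr (_ ^+ _); lia.
  by rewrite -rN e wM' mulr1.
set s := M.-root (-1 : algC).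
have sM : s ^+ M = -1 by rewrite rootCK.
have Ir : 0 <= 'Im r by apply: Im_rootC_ge0.
have h1 : 'Re r <= 'Re s by apply: rootC_Re_max.
set z := 3.-root s.
have zN : z ^+ (3 ^ k) = -1 by rewrite NM exprM rootCK.
have h2 : 'Re z <= 'Re r by apply: rootC_Re_max => //; apply: Im_rootC_ge0.
have ns : `|s| = 1.
  by apply/eqP; rewrite -(@pexpr_eq1 _ _ M) // -normrX sM normrN normr1.
have s1 : s != 1.
  apply/eqP => e; move: sM; rewrite e expr1n => /eqP.
  have two : (1 + 1 : algC) != 0 by rewrite -[1 + 1]/(2%:R) pnatr_eq0.
  by rewrite -subr_eq0 opprK (negbTE two).
have Is : 0 <= 'Im s.
  case: (ltngtP M 1) => [|hM|hM]; first by rewrite ltnNge M0.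
    by apply: Im_rootC_ge0.
  have : (-1:algC) \is Num.real by rewrite rpredN rpred1.
  by move/Creal_ImP; rewrite /s hM root1C => ->.
have := cube_root_Re ns s1 Is.
rewrite -/z => h3.
by have := lt_le_trans h3 (le_trans h2 h1); rewrite ltxx.
Qed.
Definition NN (k : nat) (f : algC -> algC) (z : algC) : algC :=
  \prod_(1 <= l < (3 ^ k).+1 | ~~ (3 %| l)%N) f (z ^+ l).

Lemma NN_ord k f z : NN k f z =
  \prod_(l < (3 ^ k).+1) (if ~~ (3 %| l)%N then f (z ^+ l) else 1).
Proof.
rewrite /NN big_mkcond /=.
rewrite -(big_mkord xpredT (fun l => if ~~ (3 %| l)%N then f (z ^+ l) else 1)).
by rewrite (big_ltn (ltn0Sn _)) /= mul1r.
Qed.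

Lemma coprime3 j : ~~ (3 %| j)%N -> forall k, coprime (3 ^ k) j.
Proof.
move=> hj k; case: k => [|k]; first by rewrite expn0 coprime1n.
by rewrite coprime_pexpl // prime_coprime.
Qed.

Lemma NN_twist k j f z : (0 < k)%N -> z ^+ (3 ^ k) = 1 -> ~~ (3 %| j)%N ->
  NN k (fun x => f (x ^+ j)) z = NN k f z.
Proof.
move=> kp zn hj; rewrite !NN_ord.
set n := (3 ^ k)%N.
have n0 : (0 < n)%N by rewrite expn_gt0.
have d3 : (3 %| n)%N by rewrite /n -(prednK kp) expnS dvdn_mulr.
have mod3 x : (3 %| x %% n)%N = (3 %| x)%N.
  by rewrite /dvdn (@modn_dvdm n x 3 d3).
pose h (i : 'I_n.+1) : 'I_n.+1 := if (3 %| i)%N then i else inord ((j * i) %% n).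
have hv (i : 'I_n.+1) : ~~ (3 %| i)%N -> (h i : nat) = ((j * i) %% n)%N.
  move=> hi; have hm : ((j * i) %% n < n.+1)%N by rewrite ltnS ltnW // ltn_mod.
  by rewrite /h (negbTE hi) inordK.
have cjn : coprime n j by apply: coprime3.
have nd (x : nat) : ~~ (3 %| x)%N -> ~~ (3 %| j * x)%N.
  by move=> hx; rewrite Euclid_dvdM // negb_or hj hx.
have hinj : injective h.
  have key a b : ~~ (3 %| a)%N -> ~~ (3 %| b)%N -> (a <= b)%N -> (b < n.+1)%N -> (0 < a)%N ->
      ((j * a) %% n = (j * b) %% n)%N -> a = b.
    move=> ha hb ab bn a0 e.
    have : (n %| j * (b - a))%N.
      by rewrite mulnBr -eqn_mod_dvd ?leq_mul2l ?ab ?orbT // e.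
    rewrite Gauss_dvdr //.
    have : (b - a < n)%N.
      have : b != n by apply: contra hb => /eqP ->.
      by move: bn; rewrite ltnS leq_eqVlt => /orP[/eqP-> /eqP//|bn' _]; lia.
    move=> lt dv; case: (posnP (b - a)) => [h0|hp]; first lia.
    by have := dvdn_leq hp dv; lia.
  move=> a b; rewrite /h.
  case: ifP => ha; case: ifP => hb.
  - by [].
  - move=> e; have := hv b (negbT hb); rewrite /h hb /= -e => hb'.
    by have := mod3 (j * b)%N; rewrite -hb' ha (negbTE (nd b (negbT hb))).
  - move=> e; have := hv a (negbT ha); rewrite /h ha /= e => ha'.
    by have := mod3 (j * a)%N; rewrite -ha' hb (negbTE (nd a (negbT ha))).
  - move=> e; apply/val_inj => /=.
    have e' : ((j * a) %% n = (j * b) %% n)%N.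
      by rewrite -(hv a (negbT ha)) -(hv b (negbT hb)) /h ha hb /= e.
    have a0 : (0 < a)%N by rewrite lt0n; apply: contraFneq ha => ->.
    have b0 : (0 < b)%N by rewrite lt0n; apply: contraFneq hb => ->.
    case: (leqP a b) => ab.
      by apply: key; rewrite ?ha ?hb ?ltn_ord.
    by apply/esym/key; rewrite ?ha ?hb ?ltn_ord ?(ltnW ab).
rewrite [RHS](reindex_inj hinj); apply: eq_bigr => i _.
case: (boolP (3 %| i)%N) => hi.
  by rewrite /h hi /= hi.
have -> : ~~ (3 %| h i)%N by rewrite hv // mod3 nd.
by rewrite /= hv // (expr_mod _ zn) mulnC exprM.
Qed.


Lemma NN_ext k f g z : (forall l, ~~ (3 %| l)%N -> f (z ^+ l) = g (z ^+ l)) ->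
  NN k f z = NN k g z.
Proof. by move=> h; apply: eq_bigr => l /h. Qed.

Lemma NN_mul k f g z : NN k (fun x => f x * g x) z = NN k f z * NN k g z.
Proof. exact: big_split. Qed.

Lemma NN1 k z : NN k (fun _ => 1) z = 1.
Proof. exact: big1. Qed.

Lemma NN_prim_indep k f z z' : (0 < k)%N -> (3 ^ k).-primitive_root z ->
  (3 ^ k).-primitive_root z' -> NN k f z' = NN k f z.
Proof.
move=> kp pz pz'.
have [i ei] := prim_rootP pz (prim_expr_order pz').
have ci : coprime i (3 ^ k) by rewrite -(prim_root_exp_coprime _ pz) -ei.
have hi : ~~ (3 %| i)%N.
  apply: contraTN ci => d3; rewrite /coprime; apply/eqP => g1.
  have : (3 %| gcdn i (3 ^ k))%N by rewrite dvdn_gcd d3 -(prednK kp) expnS dvdn_mulr.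
  by rewrite g1.
rewrite ei -[RHS](NN_twist f kp (prim_expr_order pz) hi).
by apply: eq_bigr => l _; rewrite exprAC.
Qed.

Lemma prod_1_sub n (z : algC) : (0 < n)%N -> n.-primitive_root z ->
  \prod_(1 <= l < n) (1 - z ^+ l) = n%:R.
Proof.
move=> n0 pz.
have h := factor_Xn_sub_1 pz.
rewrite (big_ltn n0) expr0 polyC1 subrX1 in h.
have nz : ('X - 1 : {poly algC}) != 0 by rewrite -polyC1 polyXsubC_eq0.
have h2 := mulfI nz h.
have := congr1 (fun p => p.[1]) h2.
rewrite horner_prod horner_sum /= => e.
rewrite (eq_bigr (fun i => ('X - (z ^+ i)%:P).[1])); last by move=> i _; rewrite hornerXsubC.
rewrite e.
rewrite (eq_bigr (fun _ => 1)); last by move=> i _; rewrite hornerXn expr1n.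
by rewrite sumr_const card_ord.
Qed.

Lemma mult3 (F : nat -> algC) M : (0 < M)%N ->
  \prod_(1 <= l < 3 * M | (3 %| l)%N) F l = \prod_(1 <= l < M) F (3 * l)%N.
Proof.
elim: M => // M IH _.
case: (posnP M) => [->|M0].
  by rewrite [RHS]big_geq // /index_iota /= !big_cons /= big_nil.
have -> : (3 * M.+1 = (3 * M).+2.+1)%N by lia.
rewrite big_mkcond big_nat_recr; last lia.
rewrite big_nat_recr; last lia.
rewrite big_nat_recr; last lia.
rewrite -big_mkcond IH // big_nat_recr /=; last lia.
have d1 : ~~ (3 %| (3 * M).+1)%N by rewrite -[(3 * M).+1]addn1 dvdn_addr ?dvdn_mulr.
have d2 : ~~ (3 %| (3 * M).+2)%N by rewrite -[(3 * M).+2]addn2 dvdn_addr ?dvdn_mulr.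
by rewrite (negbTE d1) (negbTE d2) dvdn_mulr // !mulr1.
Qed.

Lemma NN_drop k f z : (0 < k)%N ->
  NN k f z = \prod_(1 <= l < 3 ^ k | ~~ (3 %| l)%N) f (z ^+ l).
Proof.
move=> kp; rewrite /NN big_mkcond big_nat_recr /=; last by rewrite expn_gt0.
by rewrite -(prednK kp) expnS dvdn_mulr //= mulr1 -big_mkcond.
Qed.

Lemma NN_1mx k z : (0 < k)%N -> (3 ^ k).-primitive_root z ->
  NN k (fun x => 1 - x) z = 3.
Proof.
move=> kp pz.
set M := (3 ^ k.-1)%N.
have NM : (3 ^ k = 3 * M)%N by rewrite /M -expnS prednK.
have M0 : (0 < M)%N by rewrite expn_gt0.
have h := prod_1_sub (expn_gt0 3 k) pz.
rewrite (bigID (fun l => (3 %| l)%N)) /= in h.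
rewrite NM mult3 // in h.
have pz3 : M.-primitive_root (z ^+ 3).
  have := dvdn_prim_root pz (_ : (M %| 3 ^ k)%N).
  rewrite NM mulnK // => -> //; by rewrite dvdn_mull.
rewrite (eq_bigr (fun l => 1 - (z ^+ 3) ^+ l)) in h; last by move=> l _; rewrite exprM.
rewrite prod_1_sub // in h.
rewrite NN_drop // NM.
apply: (mulIf (_ : M%:R != 0)); first by rewrite pnatr_eq0 -lt0n.
by rewrite mulrC h natrM.
Qed.

Lemma NN_N1 k z : (k \in [:: 1; 2; 3]%N) -> NN k (fun _ => -1) z = 1.
Proof.
move=> hk; rewrite /NN big_const_seq iter_mulr mulr1 -signr_odd.
by move: hk; rewrite !inE => /or3P[] /eqP ->.
Qed.

Lemma NN_x k z : (k \in [:: 1; 2; 3]%N) -> (3 ^ k).-primitive_root z ->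
  NN k (fun x => x) z = 1.
Proof.
move=> hk pz.
have kp : (0 < k)%N by move: hk; rewrite !inE => /or3P[] /eqP ->.
set n := (3 ^ k)%N.
have zn := prim_expr_order pz.
have n3 : (3 %| n)%N by rewrite /n -(prednK kp) expnS dvdn_mulr.
have n0 : (0 < n)%N by rewrite expn_gt0.
have hj : ~~ (3 %| n.-1)%N.
  apply/negP => d; have : (3 %| n.-1 + 1)%N by rewrite addn1 prednK.
  by rewrite dvdn_addr.
have e : NN k (fun x => (1 - x ^+ n.-1) * x) z = NN k (fun x => -1 * (1 - x)) z.
  apply: NN_ext => l _.
  have : (z ^+ l) ^+ n = 1 by rewrite exprAC zn expr1n.
  rewrite -(prednK n0) exprS => e1.
  by rewrite mulrBl mul1r mulrC e1; ring.
rewrite !NN_mul NN_N1 // mul1r (NN_twist (fun x => 1 - x) kp zn hj) NN_1mx // in e.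
apply: (mulfI (_ : (3:algC) != 0)); first by rewrite pnatr_eq0.
by rewrite e mulr1.
Qed.

Lemma NN_xe k z e : (k \in [:: 1; 2; 3]%N) -> (3 ^ k).-primitive_root z ->
  NN k (fun x => x ^+ e) z = 1.
Proof. by move=> hk pz; rewrite /NN prodrXl -/(NN k (fun x => x) z) NN_x // expr1n. Qed.

Lemma ev_cb b x : ev (nseq b (Zpos xH)) x * (1 - x) = 1 - x ^+ b.
Proof.
elim: b => [|b IH] /=; first by rewrite mul0r expr0 subrr.
by rewrite ZCz1 mulrDl -mulrA IH exprS; ring.
Qed.

Lemma NN_cb k z b : (0 < k)%N -> (3 ^ k).-primitive_root z -> ~~ (3 %| b)%N ->
  NN k (ev (nseq b (Zpos xH))) z = 1.
Proof.
move=> kp pz hb.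
have e : NN k (fun x => ev (nseq b (Zpos xH)) x * (1 - x)) z = NN k (fun x => 1 - x ^+ b) z.
  by apply: NN_ext => l _; rewrite ev_cb.
rewrite NN_mul (NN_twist (fun x => 1 - x) kp (prim_expr_order pz) hb) NN_1mx // in e.
apply: (mulIf (_ : (3:algC) != 0)); first by rewrite pnatr_eq0.
by rewrite e mul1r.
Qed.


Definition PZ (s : seq Z) : {poly int} := Poly (map int_of_Z s).

Lemma evalZ_PZ s x : evalZ (PZ s) x = ev s x.
Proof.
rewrite /evalZ /PZ; elim: s => [|c s IH] /=; first by rewrite rmorph0 horner0.
rewrite cons_poly_def rmorphD rmorphM /= map_polyX map_polyC /= hornerD hornerM hornerX hornerC IH.
by rewrite /ZC addrC mulrC.
Qed.

Lemma evalZ_add p q x : evalZ (p + q) x = evalZ p x + evalZ q x.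
Proof. by rewrite /evalZ rmorphD hornerD. Qed.
Lemma evalZ_mul p q x : evalZ (p * q) x = evalZ p x * evalZ q x.
Proof. by rewrite /evalZ rmorphM hornerM. Qed.
Lemma evalZ_C c x : evalZ c%:P x = c%:~R.
Proof. by rewrite /evalZ map_polyC hornerC. Qed.
Lemma evalZ_X x : evalZ 'X x = x.
Proof. by rewrite /evalZ map_polyX hornerX. Qed.
Lemma evalZ_1 x : evalZ 1 x = 1.
Proof. by rewrite /evalZ rmorph1 hornerC. Qed.
Lemma evalZ_sub p q x : evalZ (p - q) x = evalZ p x - evalZ q x.
Proof. by rewrite /evalZ rmorphB hornerD hornerN. Qed.
Lemma evalZ_exp p n x : evalZ (p ^+ n) x = evalZ p x ^+ n.
Proof. by rewrite /evalZ rmorphXn horner_exp. Qed.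
Lemma evalZ_comp p j x : evalZ (p \Po 'X^j) x = evalZ p (x ^+ j).
Proof. by rewrite /evalZ map_comp_poly horner_comp map_polyXn hornerXn. Qed.

Definition cbl b := nseq b (Zpos xH).
Definition unitd := (bool * nat * seq nat)%type.
Definition sgZ (b : bool) : Z := if b then Zneg xH else Zpos xH.
Definition Tp (u : unitd) : seq Z :=
  psc (sgZ u.1.1) (pmul (pX u.1.2) (pmul [:: Zpos xH; Zneg xH]
     (foldr (fun b acc => pmul (cbl b) acc) [:: Zpos xH] u.2))).
Definition Tf (u : unitd) (x : algC) : algC :=
  (if u.1.1 then -1 else 1) * x ^+ u.1.2 * (1 - x) * \prod_(b <- u.2) ev (cbl b) x.

Lemma ev_Tp u x : ev (Tp u) x = Tf u x.
Proof.
have e1 : ev [:: Zpos xH; Zneg xH] x = 1 - x by rewrite /= ZCz1 ZCzN1 mulr0 addr0 mulrN1.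
have e2 bs : ev (foldr (fun b acc => pmul (cbl b) acc) [:: Zpos xH] bs) x = \prod_(b <- bs) ev (cbl b) x.
  elim: bs => [|b bs IH]; first by rewrite big_nil /= ZCz1 mulr0 addr0.
  by rewrite big_cons -IH -ev_mul.
have e3 sg : ZC (sgZ sg) = if sg then -1 else 1 by case: sg.
case: u => [[sg e] bs]; rewrite /Tp /Tf ev_sc !ev_mul ev_pX e1 e2 e3.
by rewrite !mulrA.
Qed.

Lemma NN_Tf k z u : (k \in [:: 1; 2; 3]%N) -> (3 ^ k).-primitive_root z ->
  all (fun b => ~~ (3 %| b)%N) u.2 -> NN k (Tf u) z = 3.
Proof.
move=> hk pz hb.
have kp : (0 < k)%N by move: hk; rewrite !inE => /or3P[] /eqP ->.
case: u hb => [[sg e] bs] /= hb; rewrite /Tf /= !NN_mul NN_xe // NN_1mx // mulr1.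
have -> : NN k (fun _ => if sg then -1 else 1) z = 1 by case: sg; rewrite ?NN_N1 ?NN1.
rewrite mul1r.
suff -> : NN k (fun x => \prod_(b <- bs) ev (cbl b) x) z = 1 by rewrite mulr1.
elim: bs hb => [|b bs IH] /=; first by rewrite (@NN_ext k _ (fun _ => 1)) ?NN1 // => l _; rewrite big_nil.
case/andP => hb hbs.
rewrite (@NN_ext k _ (fun x => ev (cbl b) x * \prod_(b <- bs) ev (cbl b) x)); last by move=> l _; rewrite big_cons.
by rewrite NN_mul IH // NN_cb // mul1r.
Qed.

Lemma Phi_root k (z : algC) l : (0 < k)%N -> (3 ^ k).-primitive_root z -> ~~ (3 %| l)%N ->
  1 + (z ^+ l) ^+ (3 ^ k.-1) + (z ^+ l) ^+ (2 * 3 ^ k.-1)%N = 0.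
Proof.
move=> kp pz hl.
set M := (3 ^ k.-1)%N; set w := (z ^+ l) ^+ M.
have NM : (3 ^ k = 3 * M)%N by rewrite /M -expnS prednK.
have w3 : w ^+ 3 = 1.
  by apply/eqP; rewrite /w -!exprM -(prim_order_dvd pz) NM; apply/dvdnP; exists l; lia.
have w1 : w != 1.
  by rewrite /w -exprM -(prim_order_dvd pz) NM dvdn_pmul2r ?expn_gt0.
have : (w - 1) * (1 + w + w ^+ 2) = 0.
  have -> : (w - 1) * (1 + w + w ^+ 2) = w ^+ 3 - 1 by ring.
  by rewrite w3 subrr.
move/eqP; rewrite mulf_eq0 subr_eq0 (negbTE w1) /= => /eqP.
by rewrite mulnC exprM.
Qed.


Lemma prod_split M (f : algC -> algC) (z : algC) : (0 < M)%N ->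
  \prod_(l < 3 * M) f (z ^+ l) =
  \prod_(l < M) f ((z ^+ 3) ^+ l) * \prod_(1 <= l < 3 * M | ~~ (3 %| l)%N) f (z ^+ l).
Proof.
move=> M0.
rewrite -(big_mkord xpredT (fun l => f (z ^+ l))) -(big_mkord xpredT (fun l => f ((z ^+ 3) ^+ l))).
rewrite (bigID (fun l => (3 %| l)%N)) /=.
have M3 : (0 < 3 * M)%N by lia.
congr (_ * _).
  rewrite big_mkcond (big_ltn M3) -big_mkcond /= (big_ltn M0) mult3 //.
  by rewrite !expr0; congr (_ * _); apply: eq_bigr => l _; rewrite exprM.
by rewrite big_mkcond (big_ltn M3) -big_mkcond /= mul1r.
Qed.

Lemma M27_split F : M27 F = evalZ F 1 * Nk 1 F * Nk 2 F * Nk 3 F.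
Proof.
set f := evalZ F; set w := omega 3.
have pw : (3 ^ 3).-primitive_root w := omega_prim (isT : (0 < 3)%N).
have p9 : (3 ^ 2).-primitive_root (w ^+ 3).
  by have := dvdn_prim_root pw (isT : (3 ^ 2 %| 3 ^ 3)%N).
have p3 : (3 ^ 1).-primitive_root ((w ^+ 3) ^+ 3).
  by have := dvdn_prim_root pw (isT : (3 ^ 1 %| 3 ^ 3)%N); rewrite -exprM.
have -> : M27 F = \prod_(l < 3 * 9) f (w ^+ l) by [].
rewrite prod_split // -(NN_drop _ _ (isT : (0 < 3)%N)).
have -> : \prod_(l < 9) f ((w ^+ 3) ^+ l) = \prod_(l < 3 * 3) f ((w ^+ 3) ^+ l) by [].
rewrite prod_split // -(NN_drop _ _ (isT : (0 < 2)%N)).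
have -> : \prod_(l < 3) f (((w ^+ 3) ^+ 3) ^+ l) = \prod_(l < 3 * 1) f (((w ^+ 3) ^+ 3) ^+ l) by [].
rewrite prod_split // -(NN_drop _ _ (isT : (0 < 1)%N)) big_ord1 expr0.
have e1 : Nk 1 F = NN 1 f ((w ^+ 3) ^+ 3).
  by apply: NN_prim_indep => //; apply: omega_prim.
have e2 : Nk 2 F = NN 2 f (w ^+ 3).
  by apply: NN_prim_indep => //; apply: omega_prim.
by rewrite e1 e2 /Nk -/f.
Qed.

Definition Fp (A B E : seq Z) (j : nat) (C H : {poly int}) : {poly int} :=
  PZ A + PZ B * (C \Po 'X^j) + PZ E * (H \Po 'X^j).
Definition hp (r0 r1 r2 : int) (C H : {poly int}) : {poly int} :=
  r0%:P + r1%:P * ('X - 1) + r2%:P * ('X - 1) ^+ 2 + 3%:P * C + ('X - 1) ^+ 3 * H.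
Definition Gp r0 r1 r2 C H : {poly int} := 1 + ('X - 1) ^+ 5 * hp r0 r1 r2 C H.

Lemma evalZ_F A B E j C H x : evalZ (Fp A B E j C H) x =
  ev A x + ev B x * evalZ C (x ^+ j) + ev E x * evalZ H (x ^+ j).
Proof. by rewrite /Fp !evalZ_add !evalZ_mul !evalZ_PZ !evalZ_comp. Qed.

Lemma evalZ_G r0 r1 r2 C H x : evalZ (Gp r0 r1 r2 C H) x =
  1 + (x - 1) ^+ 5 * (r0%:~R + r1%:~R * (x - 1) + r2%:~R * (x - 1) ^+ 2
     + 3 * evalZ C x + (x - 1) ^+ 3 * evalZ H x).
Proof.
have eN : evalZ (-1) x = -1 by rewrite /evalZ rmorphN1 hornerN hornerC.
rewrite /Gp /hp !(evalZ_add, evalZ_mul, evalZ_exp, evalZ_sub, evalZ_C, evalZ_X, evalZ_1, eN).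
ring.
Qed.

Definition ev1 (p : seq Z) : Z := foldr Z.add Z0 p.
Lemma ev_at1 p : ev p 1 = ZC (ev1 p).
Proof. by elim: p => [|c p IH] //=; rewrite IH mul1r ZC_add. Qed.

Definition chkU (M : nat) (A B E : seq Z) (u : unitd) : bool :=
  [&& eqm M A (Tp u), eqm M B [::], eqm M E [::] & all (fun b => ~~ (3 %| b)%N) u.2].
Definition yj j := padd (pX j) [:: Zneg xH].
Definition chkG (M j : nat) (r0 r1 r2 : Z) (A B E : seq Z) (u : unitd) : bool :=
  let y := yj j in let y2 := pmul y y in let y3 := pmul y2 y in let y5 := pmul y3 y2 in
  let T := Tp u in
  [&& eqm M A (pmul T (padd [:: Zpos xH] (pmul y5 (padd [:: r0] (padd (psc r1 y) (psc r2 y2)))))),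
      eqm M B (psc (Zpos 3) (pmul T y5)), eqm M E (pmul T (pmul y5 y3)),
      all (fun b => ~~ (3 %| b)%N) u.2 & ~~ (3 %| j)%N].
Definition chk0 (A B E : seq Z) : bool := [&& ev1 A == Zpos 3, ev1 B == Z0 & ev1 E == Z0].

Lemma ev_yj j x : ev (yj j) x = x ^+ j - 1.
Proof. by rewrite /yj ev_add ev_pX /= ZCzN1 mulr0 addr0. Qed.

Lemma levelU k M A B E u j C H z : (k \in [:: 1; 2; 3]%N) -> M = (3 ^ k.-1)%N ->
  chkU M A B E u -> (3 ^ k).-primitive_root z ->
  NN k (evalZ (Fp A B E j C H)) z = 3.
Proof.
move=> hk -> /and4P[hA hB hE hb] pz.
have kp : (0 < k)%N by move: hk; rewrite !inE => /or3P[] /eqP ->.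
rewrite -(NN_Tf hk pz hb); apply: NN_ext => l hl.
have Ph := Phi_root kp pz hl.
rewrite evalZ_F (eqmP Ph hA) (eqmP Ph hB) (eqmP Ph hE) ev_Tp /=.
by rewrite !mul0r !addr0.
Qed.

Lemma levelG k M A B E u j r0 r1 r2 C H z : (k \in [:: 1; 2; 3]%N) -> M = (3 ^ k.-1)%N ->
  chkG M j r0 r1 r2 A B E u -> (3 ^ k).-primitive_root z ->
  NN k (evalZ (Fp A B E j C H)) z =
  3 * NN k (evalZ (Gp (int_of_Z r0) (int_of_Z r1) (int_of_Z r2) C H)) z.
Proof.
move=> hk -> /and5P[hA hB hE hb hj] pz.
have kp : (0 < k)%N by move: hk; rewrite !inE => /or3P[] /eqP ->.
rewrite -(NN_Tf hk pz hb).
rewrite -(NN_twist (evalZ (Gp (int_of_Z r0) (int_of_Z r1) (int_of_Z r2) C H)) kp (prim_expr_order pz) hj).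
rewrite -NN_mul; apply: NN_ext => l hl.
have Ph := Phi_root kp pz hl.
rewrite evalZ_F (eqmP Ph hA) (eqmP Ph hB) (eqmP Ph hE) evalZ_G.
rewrite !(ev_mul, ev_add, ev_sc, ev_yj, ev_Tp).
rewrite /= !mulr0 !addr0.
rewrite /ZC /=.
rewrite (_ : (Pos.to_nat 1)%:~R = 1 :> algC) // (_ : (Pos.to_nat 3)%:~R = 3 :> algC) //.
ring.
Qed.

Lemma F_at1 A B E j C H : chk0 A B E -> (Fp A B E j C H).[1] = 3.
Proof.
case/and3P => /eqP hA /eqP hB /eqP hE.
apply: (@intr_inj algC).
have -> : ((Fp A B E j C H).[1])%:~R = evalZ (Fp A B E j C H) 1.
  by rewrite /evalZ -(rmorph1 (intr : int -> algC)) horner_map.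
rewrite evalZ_F !ev_at1 hA hB hE.
by rewrite /ZC /= !mul0r !addr0.
Qed.

Lemma case1 A B E j u1 u2 u3 r0 r1 r2 C H :
  [&& chk0 A B E, chkU 1 A B E u1, chkG 3 j r0 r1 r2 A B E u2 & chkU 9 A B E u3] = true ->
  let F := Fp A B E j C H in let G := Gp (int_of_Z r0) (int_of_Z r1) (int_of_Z r2) C H in
  [/\ F.[1] = 3, Nk 1 F = 3, Nk 3 F = 3, Nk 2 F = 3 * Nk 2 G & M27 F = 3 ^+ 4 * Nk 2 G].
Proof.
case/and4P => h0 h1 h2 h3 F G.
have e1 : Nk 1 F = 3 by apply: (levelU (M := 1) (u := u1)) => //; apply: omega_prim.
have e3 : Nk 3 F = 3 by apply: (levelU (M := 9) (u := u3)) => //; apply: omega_prim.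
have e2 : Nk 2 F = 3 * Nk 2 G by apply: (levelG (M := 3) (u := u2)) => //; apply: omega_prim.
have f1 : F.[1] = 3 by apply: F_at1.
split => //.
rewrite M27_split e1 e2 e3.
have -> : evalZ F 1 = 3.
  by rewrite /evalZ -(rmorph1 (intr : int -> algC)) horner_map f1.
ring.
Qed.

Lemma case2 A B E j u1 u2 u3 r0 r1 r2 C H :
  [&& chk0 A B E, chkU 1 A B E u1, chkU 3 A B E u2 & chkG 9 j r0 r1 r2 A B E u3] = true ->
  let F := Fp A B E j C H in let G := Gp (int_of_Z r0) (int_of_Z r1) (int_of_Z r2) C H in
  [/\ F.[1] = 3, Nk 1 F = 3, Nk 2 F = 3, Nk 3 F = 3 * Nk 3 G & M27 F = 3 ^+ 4 * Nk 3 G].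
Proof.
case/and4P => h0 h1 h2 h3 F G.
have e1 : Nk 1 F = 3 by apply: (levelU (M := 1) (u := u1)) => //; apply: omega_prim.
have e2 : Nk 2 F = 3 by apply: (levelU (M := 3) (u := u2)) => //; apply: omega_prim.
have e3 : Nk 3 F = 3 * Nk 3 G by apply: (levelG (M := 9) (u := u3)) => //; apply: omega_prim.
have f1 : F.[1] = 3 by apply: F_at1.
split => //.
rewrite M27_split e1 e2 e3.
have -> : evalZ F 1 = 3.
  by rewrite /evalZ -(rmorph1 (intr : int -> algC)) horner_map f1.
ring.
Qed.

Lemma taylor1 (p : {poly int}) : exists q, p = (p.[1])%:P + ('X - 1) * q.
Proof.
have : root (p - (p.[1])%:P) 1 by rewrite rootE hornerD hornerN hornerC subrr.
case/factor_theorem => q e; exists q.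
by rewrite -polyC1 mulrC -e addrC subrK.
Qed.

Lemma hdecomp (h : {poly int}) : ~~ (3 %| h.[1])%Z -> exists (r0 r1 r2 : int) (C H : {poly int}),
  [/\ r0 = 1 \/ r0 = 2, r1 = 0 \/ r1 = 1 \/ r1 = 2, r2 = 0 \/ r2 = 1 \/ r2 = 2
    & h = hp r0 r1 r2 C H].
Proof.
move=> hd.
have [q1 e1] := taylor1 h; have [q2 e2] := taylor1 q1; have [H e3] := taylor1 q2.
set a0 := h.[1] in e1 hd; set a1 := q1.[1] in e2; set a2 := q2.[1] in e3.
have three : (3 : int) != 0 by [].
have r012 (a : int) : let r := (a %% 3)%Z in r = 0 \/ r = 1 \/ r = 2.
  move=> r; have := modz_ge0 a three; have := ltz_pmod a (isT : (0 : int) < 3).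
  rewrite -/r; lia.
exists (a0 %% 3)%Z, (a1 %% 3)%Z, (a2 %% 3)%Z.
exists ((a0 %/ 3)%Z%:P + (a1 %/ 3)%Z%:P * ('X - 1) + (a2 %/ 3)%Z%:P * ('X - 1) ^+ 2), H.
split; [| exact: r012 | exact: r012 |].
  have := r012 a0 => /=; case=> [h0|]; last by [].
  by move: hd; rewrite /dvdz; move/dvdz_mod0P: h0 => ->.
rewrite e1 e2 e3 /hp.
rewrite {1}(divz_eq a0 3) {1}(divz_eq a1 3) {1}(divz_eq a2 3).
rewrite !polyCD !polyCM.
ring.
Qed.

Section Data.
Local Open Scope Z_scope.
Definition d2_100_A : seq Z := [:: 0; -1; -4; 1; -6; 3; -5; 3; -1; 3; 3; 0; 5; -2; 6; -3; 3; -3; 1; 1; -2; 3; -4; 5; -3; 3; -3].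
Definition d2_100_B : seq Z := [:: 3; 3; -7; 9; -12; 14; -12; 9; -7; 3; 3; -7; 9; -12; 14; -12; 9; -7; 3; 3; -7; 9; -12; 14; -12; 9; -7].
Definition d2_100_E : seq Z := [:: -21; 12; 0; -12; 21; -28; 33; -33; 28; -21; 12; 0; -12; 21; -28; 33; -33; 28; -21; 12; 0; -12; 21; -28; 33; -33; 28].
Definition d2_101_A : seq Z := [:: 7; -9; 0; -11; -9; -9; -16; -6; -15; 4; -6; 9; 4; 12; 15; 8; 15; 0; 13; -3; 6; -4; 0; 2; -3; 6; -7].
Definition d2_101_B : seq Z := [:: 4; -2; 3; -2; -2; 3; -2; 4; -6; 4; -2; 3; -2; -2; 3; -2; 4; -6; 4; -2; 3; -2; -2; 3; -2; 4; -6].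
Definition d2_101_E : seq Z := [:: -12; 12; -9; 7; -5; 0; 5; -7; 9; -12; 12; -9; 7; -5; 0; 5; -7; 9; -12; 12; -9; 7; -5; 0; 5; -7; 9].
Definition d2_102_A : seq Z := [:: -12; 22; -21; 25; -23; 18; -13; 1; 4; -13; 19; -24; 24; -23; 19; -10; 4; 5; -13; 19; -24; 24; -23; 19; -10; 4; 5].
Definition d2_102_B : seq Z := [:: -7; 8; -8; 8; -7; 4; -1; -1; 4; -7; 8; -8; 8; -7; 4; -1; -1; 4; -7; 8; -8; 8; -7; 4; -1; -1; 4].
Definition d2_102_E : seq Z := [:: 7; -14; 19; -21; 21; -19; 14; -7; 0; 7; -14; 19; -21; 21; -19; 14; -7; 0; 7; -14; 19; -21; 21; -19; 14; -7].
Definition d2_110_A : seq Z := [:: -2; 1; 2; -3; 3; -4; 5; -4; 3; -2; 1; 1; -2; 3; -4; 5; -4; 3; -2; 1; 1; -2; 3; -4; 5; -4; 3].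
Definition d2_110_B : seq Z := [:: 3; 3; -7; 9; -12; 14; -12; 9; -7; 3; 3; -7; 9; -12; 14; -12; 9; -7; 3; 3; -7; 9; -12; 14; -12; 9; -7].
Definition d2_110_E : seq Z := [:: -21; 12; 0; -12; 21; -28; 33; -33; 28; -21; 12; 0; -12; 21; -28; 33; -33; 28; -21; 12; 0; -12; 21; -28; 33; -33; 28].
Definition d2_111_A : seq Z := [:: 4; -4; 4; -2; 1; 1; -2; 3; -4; 5; -4; 3; -2; 1; 1; -2; 3; -4; 5; -4; 3; -2; 1; 1; -2; 3; -4].
Definition d2_111_B : seq Z := [:: 4; -2; 3; -2; -2; 3; -2; 4; -6; 4; -2; 3; -2; -2; 3; -2; 4; -6; 4; -2; 3; -2; -2; 3; -2; 4; -6].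
Definition d2_111_E : seq Z := [:: -12; 12; -9; 7; -5; 0; 5; -7; 9; -12; 12; -9; 7; -5; 0; 5; -7; 9; -12; 12; -9; 7; -5; 0; 5; -7; 9].
Definition d2_112_A : seq Z := [:: -9; 15; -17; 19; -18; 15; -10; 3; 3; -9; 15; -18; 19; -18; 15; -9; 3; 3; -9; 15; -18; 19; -18; 15; -9; 3; 3].
Definition d2_112_B : seq Z := [:: -7; 8; -8; 8; -7; 4; -1; -1; 4; -7; 8; -8; 8; -7; 4; -1; -1; 4; -7; 8; -8; 8; -7; 4; -1; -1; 4].
Definition d2_112_E : seq Z := [:: 7; -14; 19; -21; 21; -19; 14; -7; 0; 7; -14; 19; -21; 21; -19; 14; -7; 0; 7; -14; 19; -21; 21; -19; 14; -7].
Definition d2_120_A : seq Z := [:: -4; 3; 7; -5; 13; -10; 15; -11; 7; -8; -2; 2; -10; 8; -14; 13; -11; 9; -4; 2; 5; -8; 9; -14; 13; -11; 9].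
Definition d2_120_B : seq Z := [:: 3; 3; -7; 9; -12; 14; -12; 9; -7; 3; 3; -7; 9; -12; 14; -12; 9; -7; 3; 3; -7; 9; -12; 14; -12; 9; -7].
Definition d2_120_E : seq Z := [:: -21; 12; 0; -12; 21; -28; 33; -33; 28; -21; 12; 0; -12; 21; -28; 33; -33; 28; -21; 12; 0; -12; 21; -28; 33; -33; 28].
Definition d2_121_A : seq Z := [:: -1; -5; -2; -5; -3; -2; 1; 5; 4; 5; 1; 4; 2; 3; 0; -1; -1; -3; 0; -2; 3; 2; 3; 0; -1; -1; -3].
Definition d2_121_B : seq Z := [:: 4; -2; 3; -2; -2; 3; -2; 4; -6; 4; -2; 3; -2; -2; 3; -2; 4; -6; 4; -2; 3; -2; -2; 3; -2; 4; -6].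
Definition d2_121_E : seq Z := [:: -12; 12; -9; 7; -5; 0; 5; -7; 9; -12; 12; -9; 7; -5; 0; 5; -7; 9; -12; 12; -9; 7; -5; 0; 5; -7; 9].
Definition d2_122_A : seq Z := [:: -3; 16; -3; 26; 2; 26; 5; 12; 5; -9; 1; -25; -1; -28; -1; -17; -3; -1; -4; 13; -9; 16; -13; 9; -11].
Definition d2_122_B : seq Z := [:: -7; 8; -8; 8; -7; 4; -1; -1; 4; -7; 8; -8; 8; -7; 4; -1; -1; 4; -7; 8; -8; 8; -7; 4; -1; -1; 4].
Definition d2_122_E : seq Z := [:: 7; -14; 19; -21; 21; -19; 14; -7; 0; 7; -14; 19; -21; 21; -19; 14; -7; 0; 7; -14; 19; -21; 21; -19; 14; -7].
Definition d2_200_A : seq Z := [:: 4; -6; -5; 5; 8; -2; -9; -2; 8; 5; -6; -6; 5; 8; -2; -9; -2; 8; 5; -6; -6; 5; 8; -2; -9; -2; 8].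
Definition d2_200_B : seq Z := [:: 7; -9; -9; 7; 12; -3; -14; -3; 12; 7; -9; -9; 7; 12; -3; -14; -3; 12; 7; -9; -9; 7; 12; -3; -14; -3; 12].
Definition d2_200_E : seq Z := [:: 0; 33; 12; -28; -21; 21; 28; -12; -33; 0; 33; 12; -28; -21; 21; 28; -12; -33; 0; 33; 12; -28; -21; 21; 28; -12; -33].
Definition d2_201_A : seq Z := [:: -11; -14; 7; 15; -1; -16; -4; 15; 10; -11; -14; 6; 16; -1; -16; -4; 15; 10; -11; -14; 6; 16; -1; -16; -4; 15; 10].
Definition d2_201_B : seq Z := [:: -4; -8; 1; 8; 1; -8; -4; 7; 7; -4; -8; 1; 8; 1; -8; -4; 7; 7; -4; -8; 1; 8; 1; -8; -4; 7; 7].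
Definition d2_201_E : seq Z := [:: 19; 14; -14; -19; 7; 21; 0; -21; -7; 19; 14; -14; -19; 7; 21; 0; -21; -7; 19; 14; -14; -19; 7; 21; 0; -21; -7].
Definition d2_202_A : seq Z := [:: 15; -2; -15; -5; 12; 8; -10; -10; 8; 15; -2; -16; -5; 12; 8; -9; -10; 8; 15; -2; -16; -5; 12; 8; -9; -10; 8].
Definition d2_202_B : seq Z := [:: 6; 2; -4; -3; 2; 2; -3; -4; 2; 6; 2; -4; -3; 2; 2; -3; -4; 2; 6; 2; -4; -3; 2; 2; -3; -4; 2].
Definition d2_202_E : seq Z := [:: -9; 5; 12; 0; -12; -5; 9; 7; -7; -9; 5; 12; 0; -12; -5; 9; 7; -7; -9; 5; 12; 0; -12; -5; 9; 7; -7].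
Definition d2_210_A : seq Z := [:: -1; -2; -4; -5; -3; 0; 1; 2; 4; 5; 4; 2; 2; 3; 2; -1; -4; -3; 0; 1; 1; 2; 3; 2; -1; -4; -3].
Definition d2_210_B : seq Z := [:: 7; -9; -9; 7; 12; -3; -14; -3; 12; 7; -9; -9; 7; 12; -3; -14; -3; 12; 7; -9; -9; 7; 12; -3; -14; -3; 12].
Definition d2_210_E : seq Z := [:: 0; 33; 12; -28; -21; 21; 28; -12; -33; 0; 33; 12; -28; -21; 21; 28; -12; -33; 0; 33; 12; -28; -21; 21; 28; -12; -33].
Definition d2_211_A : seq Z := [:: -6; -7; 7; 13; 2; -8; -1; 10; 5; -10; -12; 2; 8; -3; -12; -3; 10; 7; -6; -8; 5; 10; -2; -12; -3; 10; 7].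
Definition d2_211_B : seq Z := [:: -4; -8; 1; 8; 1; -8; -4; 7; 7; -4; -8; 1; 8; 1; -8; -4; 7; 7; -4; -8; 1; 8; 1; -8; -4; 7; 7].
Definition d2_211_E : seq Z := [:: 19; 14; -14; -19; 7; 21; 0; -21; -7; 19; 14; -14; -19; 7; 21; 0; -21; -7; 19; 14; -14; -19; 7; 21; 0; -21; -7].
Definition d2_212_A : seq Z := [:: 14; 4; -3; 9; 25; 21; 5; 1; 10; 8; -11; -25; -18; -5; -6; -17; -14; 4; 13; 1; -9; -1; 10; 4; -11; -11; 5].
Definition d2_212_B : seq Z := [:: 6; 2; -4; -3; 2; 2; -3; -4; 2; 6; 2; -4; -3; 2; 2; -3; -4; 2; 6; 2; -4; -3; 2; 2; -3; -4; 2].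
Definition d2_212_E : seq Z := [:: -9; 5; 12; 0; -12; -5; 9; 7; -7; -9; 5; 12; 0; -12; -5; 9; 7; -7; -9; 5; 12; 0; -12; -5; 9; 7; -7].
Definition d2_220_A : seq Z := [:: -3; 5; 0; -13; -16; -7; -4; -13; -17; -6; 8; 9; 2; 5; 17; 20; 8; -2; 3; 11; 6; -6; -7; 4; 9; -1; -9].
Definition d2_220_B : seq Z := [:: 7; -9; -9; 7; 12; -3; -14; -3; 12; 7; -9; -9; 7; 12; -3; -14; -3; 12; 7; -9; -9; 7; 12; -3; -14; -3; 12].
Definition d2_220_E : seq Z := [:: 0; 33; 12; -28; -21; 21; 28; -12; -33; 0; 33; 12; -28; -21; 21; 28; -12; -33; 0; 33; 12; -28; -21; 21; 28; -12; -33].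
Definition d2_221_A : seq Z := [:: -5; -6; 1; 3; -3; -7; -2; 5; 4; -2; -2; 5; 7; 1; -4; 0; 5; 2; -4; -4; 3; 5; -1; -5; 0; 5; 2].
Definition d2_221_B : seq Z := [:: -4; -8; 1; 8; 1; -8; -4; 7; 7; -4; -8; 1; 8; 1; -8; -4; 7; 7; -4; -8; 1; 8; 1; -8; -4; 7; 7].
Definition d2_221_E : seq Z := [:: 19; 14; -14; -19; 7; 21; 0; -21; -7; 19; 14; -14; -19; 7; 21; 0; -21; -7; 19; 14; -14; -19; 7; 21; 0; -21; -7].
Definition d2_222_A : seq Z := [:: 9; 0; -7; -1; 8; 4; -8; -8; 4; 8; -3; -10; -2; 8; 5; -5; -5; 5; 8; -3; -10; -2; 8; 5; -5; -5; 5].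
Definition d2_222_B : seq Z := [:: 6; 2; -4; -3; 2; 2; -3; -4; 2; 6; 2; -4; -3; 2; 2; -3; -4; 2; 6; 2; -4; -3; 2; 2; -3; -4; 2].
Definition d2_222_E : seq Z := [:: -9; 5; 12; 0; -12; -5; 9; 7; -7; -9; 5; 12; 0; -12; -5; 9; 7; -7; -9; 5; 12; 0; -12; -5; 9; 7; -7].
Definition d3_100_A : seq Z := [:: 0; 2; 2; 0; 0; 0; -3; 0; 5; 0; -3; -3; 1; 5; 0; -3; 0; 0; 0; 1; 2; 0; -5; 0; 7; 0; -5].
Definition d3_100_B : seq Z := [:: -1; 6; 3; -1; 0; 0; -10; 0; 15; 2; -9; -9; 2; 15; 0; -10; 0; 0; -1; 3; 6; -1; -15; 0; 20; 0; -15].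
Definition d3_100_E : seq Z := [:: 0; -42; -2; 28; 4; -12; 0; 3; -14; -1; 28; 5; -28; -16; 16; 28; -5; -28; 1; 14; -3; 0; 12; -4; -28; 2; 42].
Definition d3_101_A : seq Z := [:: -2; 3; 0; 8; 8; -11; -20; 7; 22; -2; -6; 1; -15; -4; 22; 10; -14; -11; 5; 3; 0; 8; -4; -11; 10; 7; -11].
Definition d3_101_B : seq Z := [:: 0; -5; -2; 9; 10; -5; -18; 1; 10; 0; 10; 1; -18; -5; 10; 9; -2; -5; 0; -5; 1; 9; -5; -5; 9; 1; -5].
Definition d3_101_E : seq Z := [:: 9; -14; -2; 0; -5; 14; 18; -16; -32; 9; 28; -3; 0; 3; -28; -9; 32; 16; -18; -14; 5; 0; 2; 14; -9; -16; 16].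
Definition d3_102_A : seq Z := [:: 27; 25; -26; -13; 27; -8; -39; 34; 54; -53; -50; 51; 28; -35; -3; 27; -16; -28; 27; 25; -24; -15; 8; 11; 13; -18; -26].
Definition d3_102_B : seq Z := [:: 10; 5; -7; 1; 11; -10; -20; 20; 20; -20; -10; 11; 1; -7; 5; 10; -10; -10; 10; 5; -4; -2; -4; 5; 10; -10; -10].
Definition d3_102_E : seq Z := [:: -19; -23; 24; 18; -24; -4; 28; -16; -40; 37; 47; -47; -37; 40; 16; -28; 4; 24; -18; -24; 23; 19; -16; -12; 0; 12; 16].
Definition d3_110_A : seq Z := [:: 2; -5; -1; 0; -1; -1; 1; 2; -1; 1; 5; -1; -5; -5; 0; 6; 2; -1; 2; 0; -2; -1; 0; -1; -4; 2; 9].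
Definition d3_110_B : seq Z := [:: -1; 6; 3; -1; 0; 0; -10; 0; 15; 2; -9; -9; 2; 15; 0; -10; 0; 0; -1; 3; 6; -1; -15; 0; 20; 0; -15].
Definition d3_110_E : seq Z := [:: 0; -42; -2; 28; 4; -12; 0; 3; -14; -1; 28; 5; -28; -16; 16; 28; -5; -28; 1; 14; -3; 0; 12; -4; -28; 2; 42].
Definition d3_111_A : seq Z := [:: -3; 0; -3; 1; 4; -4; -7; 8; 14; -3; -9; -3; -8; -2; 15; 9; -7; -5; 3; 0; -4; 1; -2; -4; 9; 8; -5].
Definition d3_111_B : seq Z := [:: 0; -5; -2; 9; 10; -5; -18; 1; 10; 0; 10; 1; -18; -5; 10; 9; -2; -5; 0; -5; 1; 9; -5; -5; 9; 1; -5].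
Definition d3_111_E : seq Z := [:: 9; -14; -2; 0; -5; 14; 18; -16; -32; 9; 28; -3; 0; 3; -28; -9; 32; 16; -18; -14; 5; 0; 2; 14; -9; -16; 16].
Definition d3_112_A : seq Z := [:: 19; 19; -21; -11; 22; -3; -28; 24; 40; -41; -41; 40; 25; -28; -3; 22; -11; -22; 19; 19; -20; -12; 9; 10; 9; -13; -20].
Definition d3_112_B : seq Z := [:: 10; 5; -7; 1; 11; -10; -20; 20; 20; -20; -10; 11; 1; -7; 5; 10; -10; -10; 10; 5; -4; -2; -4; 5; 10; -10; -10].
Definition d3_112_E : seq Z := [:: -19; -23; 24; 18; -24; -4; 28; -16; -40; 37; 47; -47; -37; 40; 16; -28; 4; 24; -18; -24; 23; 19; -16; -12; 0; 12; 16].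
Definition d3_120_A : seq Z := [:: 1; -12; -1; 5; 3; 0; 3; -1; -12; -1; 13; 4; -6; -10; 2; 13; -1; -7; 1; -1; -3; 3; 10; 0; -17; -1; 18].
Definition d3_120_B : seq Z := [:: -1; 6; 3; -1; 0; 0; -10; 0; 15; 2; -9; -9; 2; 15; 0; -10; 0; 0; -1; 3; 6; -1; -15; 0; 20; 0; -15].
Definition d3_120_E : seq Z := [:: 0; -42; -2; 28; 4; -12; 0; 3; -14; -1; 28; 5; -28; -16; 16; 28; -5; -28; 1; 14; -3; 0; 12; -4; -28; 2; 42].
Definition d3_121_A : seq Z := [:: 27; 75; 83; 52; 0; -55; -83; -69; -25; 27; 66; 82; 57; 0; -50; -81; -78; -30; 32; 75; 81; 52; 0; -55; -81; -69; -30].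
Definition d3_121_B : seq Z := [:: 0; -5; -2; 9; 10; -5; -18; 1; 10; 0; 10; 1; -18; -5; 10; 9; -2; -5; 0; -5; 1; 9; -5; -5; 9; 1; -5].
Definition d3_121_E : seq Z := [:: 9; -14; -2; 0; -5; 14; 18; -16; -32; 9; 28; -3; 0; 3; -28; -9; 32; 16; -18; -14; 5; 0; 2; 14; -9; -16; 16].
Definition d3_122_A : seq Z := [:: 42; 40; -5; -20; -10; -29; -37; 14; 46; 2; -5; 40; 11; -48; -34; -3; -6; 4; 42; 40; -5; -20; -17; -22; -15; -8; 6].
Definition d3_122_B : seq Z := [:: 10; 5; -7; 1; 11; -10; -20; 20; 20; -20; -10; 11; 1; -7; 5; 10; -10; -10; 10; 5; -4; -2; -4; 5; 10; -10; -10].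
Definition d3_122_E : seq Z := [:: -19; -23; 24; 18; -24; -4; 28; -16; -40; 37; 47; -47; -37; 40; 16; -28; 4; 24; -18; -24; 23; 19; -16; -12; 0; 12; 16].
Definition d3_200_A : seq Z := [:: -1; -1; -1; 8; -19; 28; -19; 8; -2; -1; -1; 0; -3; 11; -12; 11; -4; 0; -1; -1; 0; -3; 11; -12; 11; -4].
Definition d3_200_B : seq Z := [:: 0; 0; -2; 12; -30; 40; -30; 12; -2; 0; 0; 1; -6; 15; -20; 15; -6; 1; 0; 0; 1; -6; 15; -20; 15; -6; 1].
Definition d3_200_E : seq Z := [:: 12; -3; 1; -6; 24; -56; 84; -84; 56; -24; 6; -1; 3; -12; 28; -42; 42; -28; 12; -3; 0; 3; -12; 28; -42; 42; -28].
Definition d3_201_A : seq Z := [:: 17; -18; 3; 7; -27; 39; -25; 7; 24; -37; 27; -18; -3; 13; -16; 18; 1; -10; 17; -18; 5; -10; 14; -16; 18; 1; -10].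
Definition d3_201_B : seq Z := [:: 10; -5; -1; 10; -20; 20; -8; -8; 20; -20; 10; -1; -5; 10; -10; 4; 4; -10; 10; -5; 2; -5; 10; -10; 4; 4; -10].
Definition d3_201_E : seq Z := [:: -16; 23; -18; 4; 16; -37; 46; -32; 0; 32; -46; 37; -16; -4; 18; -23; 16; 0; -16; 23; -19; 12; -12; 19; -23; 16].
Definition d3_202_A : seq Z := [:: 0; 8; -24; 44; -70; 74; -57; 32; -7; 5; -16; 41; -70; 72; -60; 37; -14; 7; 0; 8; -21; 20; -8; -16; 23; -12; 7].
Definition d3_202_B : seq Z := [:: -1; 5; -12; 20; -25; 21; -10; 2; 0; 2; -10; 21; -25; 20; -12; 5; -1; 0; -1; 5; -9; 5; 5; -9; 5; -1].
Definition d3_202_E : seq Z := [:: 3; -3; 10; -24; 42; -56; 56; -40; 19; -6; 6; -19; 40; -56; 56; -42; 24; -10; 3; -3; 9; -16; 14; 0; -14; 16; -9].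
Definition d3_210_A : seq Z := [:: 29; 25; 10; -7; -31; -25; -15; -6; 22; 28; 25; 10; -11; -22; -30; -20; 3; 17; 29; 25; 10; -11; -22; -30; -20; 3; 17].
Definition d3_210_B : seq Z := [:: 0; 0; -2; 12; -30; 40; -30; 12; -2; 0; 0; 1; -6; 15; -20; 15; -6; 1; 0; 0; 1; -6; 15; -20; 15; -6; 1].
Definition d3_210_E : seq Z := [:: 12; -3; 1; -6; 24; -56; 84; -84; 56; -24; 6; -1; 3; -12; 28; -42; 42; -28; 12; -3; 0; 3; -12; 28; -42; 42; -28].
Definition d3_211_A : seq Z := [:: 40; 62; 87; 59; -17; -30; -101; -68; -15; 6; 92; 71; 54; 8; -65; -72; -74; -35; 40; 62; 88; 48; 9; -65; -72; -74; -35].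
Definition d3_211_B : seq Z := [:: 10; -5; -1; 10; -20; 20; -8; -8; 20; -20; 10; -1; -5; 10; -10; 4; 4; -10; 10; -5; 2; -5; 10; -10; 4; 4; -10].
Definition d3_211_E : seq Z := [:: -16; 23; -18; 4; 16; -37; 46; -32; 0; 32; -46; 37; -16; -4; 18; -23; 16; 0; -16; 23; -19; 12; -12; 19; -23; 16].
Definition d3_212_A : seq Z := [:: -1; 6; -17; 36; -52; 60; -48; 25; -9; 3; -12; 32; -52; 60; -48; 30; -15; 4; -1; 6; -15; 18; -5; -10; 17; -13; 4].
Definition d3_212_B : seq Z := [:: -1; 5; -12; 20; -25; 21; -10; 2; 0; 2; -10; 21; -25; 20; -12; 5; -1; 0; -1; 5; -9; 5; 5; -9; 5; -1].
Definition d3_212_E : seq Z := [:: 3; -3; 10; -24; 42; -56; 56; -40; 19; -6; 6; -19; 40; -56; 56; -42; 24; -10; 3; -3; 9; -16; 14; 0; -14; 16; -9].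
Definition d3_220_A : seq Z := [:: 1; 0; 1; -2; 8; -20; 27; -20; 8; -1; 0; 0; 1; -4; 10; -13; 10; -4; 1; 0; 0; 1; -4; 10; -13; 10; -4].
Definition d3_220_B : seq Z := [:: 0; 0; -2; 12; -30; 40; -30; 12; -2; 0; 0; 1; -6; 15; -20; 15; -6; 1; 0; 0; 1; -6; 15; -20; 15; -6; 1].
Definition d3_220_E : seq Z := [:: 12; -3; 1; -6; 24; -56; 84; -84; 56; -24; 6; -1; 3; -12; 28; -42; 42; -28; 12; -3; 0; 3; -12; 28; -42; 42; -28].
Definition d3_221_A : seq Z := [:: 5; -5; 4; 2; -7; 10; -10; 4; 4; -9; 10; -7; 2; 3; -5; 5; -2; -2; 5; -5; 4; -3; 4; -5; 5; -2; -2].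
Definition d3_221_B : seq Z := [:: 10; -5; -1; 10; -20; 20; -8; -8; 20; -20; 10; -1; -5; 10; -10; 4; 4; -10; 10; -5; 2; -5; 10; -10; 4; 4; -10].
Definition d3_221_E : seq Z := [:: -16; 23; -18; 4; 16; -37; 46; -32; 0; 32; -46; 37; -16; -4; 18; -23; 16; 0; -16; 23; -19; 12; -12; 19; -23; 16].
Definition d3_222_A : seq Z := [:: -1; 4; -11; 25; -38; 44; -37; 22; -8; 2; -8; 22; -37; 44; -38; 25; -12; 4; -1; 4; -10; 13; -6; -6; 13; -10; 4].
Definition d3_222_B : seq Z := [:: -1; 5; -12; 20; -25; 21; -10; 2; 0; 2; -10; 21; -25; 20; -12; 5; -1; 0; -1; 5; -9; 5; 5; -9; 5; -1].
Definition d3_222_E : seq Z := [:: 3; -3; 10; -24; 42; -56; 56; -40; 19; -6; 6; -19; 40; -56; 56; -42; 24; -10; 3; -3; 9; -16; 14; 0; -14; 16; -9].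

End Data.
Lemma chk_d2_100 : [&& chk0 d2_100_A d2_100_B d2_100_E, chkU 1 d2_100_A d2_100_B d2_100_E (false, 0%N, [:: ]%N), chkG 3 1 (Z.of_nat 1) (Z.of_nat 0) (Z.of_nat 0) d2_100_A d2_100_B d2_100_E (false, 2%N, [:: ]%N) & chkU 9 d2_100_A d2_100_B d2_100_E (true, 0%N, [:: 2; 7; 7]%N)] = true.
Proof. vm_compute. reflexivity. Qed.

Lemma P_d2_100 C H : let F := Fp d2_100_A d2_100_B d2_100_E 1 C H in let G := Gp 1 0 0 C H in
  [/\ F.[1] = 3, Nk 1 F = 3, Nk 3 F = 3, Nk 2 F = 3 * Nk 2 G & M27 F = 3 ^+ 4 * Nk 2 G].
Proof. exact: (case1 C H chk_d2_100). Qed.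

Lemma chk_d2_101 : [&& chk0 d2_101_A d2_101_B d2_101_E, chkU 1 d2_101_A d2_101_B d2_101_E (false, 0%N, [:: ]%N), chkG 3 1 (Z.of_nat 1) (Z.of_nat 0) (Z.of_nat 1) d2_101_A d2_101_B d2_101_E (false, 2%N, [:: 7]%N) & chkU 9 d2_101_A d2_101_B d2_101_E (true, 0%N, [:: 2; 7; 7; 7]%N)] = true.
Proof. vm_compute. reflexivity. Qed.

Lemma P_d2_101 C H : let F := Fp d2_101_A d2_101_B d2_101_E 1 C H in let G := Gp 1 0 1 C H in
  [/\ F.[1] = 3, Nk 1 F = 3, Nk 3 F = 3, Nk 2 F = 3 * Nk 2 G & M27 F = 3 ^+ 4 * Nk 2 G].
Proof. exact: (case1 C H chk_d2_101). Qed.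

Lemma chk_d2_102 : [&& chk0 d2_102_A d2_102_B d2_102_E, chkU 1 d2_102_A d2_102_B d2_102_E (false, 0%N, [:: ]%N), chkG 3 1 (Z.of_nat 1) (Z.of_nat 0) (Z.of_nat 2) d2_102_A d2_102_B d2_102_E (false, 2%N, [:: 4]%N) & chkU 9 d2_102_A d2_102_B d2_102_E (false, 0%N, [:: 2; 2; 2; 5]%N)] = true.
Proof. vm_compute. reflexivity. Qed.

Lemma P_d2_102 C H : let F := Fp d2_102_A d2_102_B d2_102_E 1 C H in let G := Gp 1 0 2 C H in
  [/\ F.[1] = 3, Nk 1 F = 3, Nk 3 F = 3, Nk 2 F = 3 * Nk 2 G & M27 F = 3 ^+ 4 * Nk 2 G].
Proof. exact: (case1 C H chk_d2_102). Qed.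

Lemma chk_d2_110 : [&& chk0 d2_110_A d2_110_B d2_110_E, chkU 1 d2_110_A d2_110_B d2_110_E (false, 0%N, [:: ]%N), chkG 3 1 (Z.of_nat 1) (Z.of_nat 1) (Z.of_nat 0) d2_110_A d2_110_B d2_110_E (false, 2%N, [:: ]%N) & chkU 9 d2_110_A d2_110_B d2_110_E (false, 2%N, [:: ]%N)] = true.
Proof. vm_compute. reflexivity. Qed.

Lemma P_d2_110 C H : let F := Fp d2_110_A d2_110_B d2_110_E 1 C H in let G := Gp 1 1 0 C H in
  [/\ F.[1] = 3, Nk 1 F = 3, Nk 3 F = 3, Nk 2 F = 3 * Nk 2 G & M27 F = 3 ^+ 4 * Nk 2 G].
Proof. exact: (case1 C H chk_d2_110). Qed.

Lemma chk_d2_111 : [&& chk0 d2_111_A d2_111_B d2_111_E, chkU 1 d2_111_A d2_111_B d2_111_E (false, 0%N, [:: ]%N), chkG 3 1 (Z.of_nat 1) (Z.of_nat 1) (Z.of_nat 1) d2_111_A d2_111_B d2_111_E (false, 2%N, [:: 7]%N) & chkU 9 d2_111_A d2_111_B d2_111_E (true, 0%N, [:: 2]%N)] = true.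
Proof. vm_compute. reflexivity. Qed.

Lemma P_d2_111 C H : let F := Fp d2_111_A d2_111_B d2_111_E 1 C H in let G := Gp 1 1 1 C H in
  [/\ F.[1] = 3, Nk 1 F = 3, Nk 3 F = 3, Nk 2 F = 3 * Nk 2 G & M27 F = 3 ^+ 4 * Nk 2 G].
Proof. exact: (case1 C H chk_d2_111). Qed.

Lemma chk_d2_112 : [&& chk0 d2_112_A d2_112_B d2_112_E, chkU 1 d2_112_A d2_112_B d2_112_E (false, 0%N, [:: ]%N), chkG 3 1 (Z.of_nat 1) (Z.of_nat 1) (Z.of_nat 2) d2_112_A d2_112_B d2_112_E (false, 2%N, [:: 4]%N) & chkU 9 d2_112_A d2_112_B d2_112_E (false, 2%N, [:: 4]%N)] = true.
Proof. vm_compute. reflexivity. Qed.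

Lemma P_d2_112 C H : let F := Fp d2_112_A d2_112_B d2_112_E 1 C H in let G := Gp 1 1 2 C H in
  [/\ F.[1] = 3, Nk 1 F = 3, Nk 3 F = 3, Nk 2 F = 3 * Nk 2 G & M27 F = 3 ^+ 4 * Nk 2 G].
Proof. exact: (case1 C H chk_d2_112). Qed.

Lemma chk_d2_120 : [&& chk0 d2_120_A d2_120_B d2_120_E, chkU 1 d2_120_A d2_120_B d2_120_E (false, 0%N, [:: ]%N), chkG 3 1 (Z.of_nat 1) (Z.of_nat 2) (Z.of_nat 0) d2_120_A d2_120_B d2_120_E (false, 2%N, [:: ]%N) & chkU 9 d2_120_A d2_120_B d2_120_E (false, 1%N, [:: 4; 5; 5]%N)] = true.
Proof. vm_compute. reflexivity. Qed.

Lemma P_d2_120 C H : let F := Fp d2_120_A d2_120_B d2_120_E 1 C H in let G := Gp 1 2 0 C H in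
  [/\ F.[1] = 3, Nk 1 F = 3, Nk 3 F = 3, Nk 2 F = 3 * Nk 2 G & M27 F = 3 ^+ 4 * Nk 2 G].
Proof. exact: (case1 C H chk_d2_120). Qed.

Lemma chk_d2_121 : [&& chk0 d2_121_A d2_121_B d2_121_E, chkU 1 d2_121_A d2_121_B d2_121_E (false, 0%N, [:: ]%N), chkG 3 1 (Z.of_nat 1) (Z.of_nat 2) (Z.of_nat 1) d2_121_A d2_121_B d2_121_E (false, 2%N, [:: 7]%N) & chkU 9 d2_121_A d2_121_B d2_121_E (true, 0%N, [:: 2; 4; 4; 4]%N)] = true.
Proof. vm_compute. reflexivity. Qed.

Lemma P_d2_121 C H : let F := Fp d2_121_A d2_121_B d2_121_E 1 C H in let G := Gp 1 2 1 C H in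
  [/\ F.[1] = 3, Nk 1 F = 3, Nk 3 F = 3, Nk 2 F = 3 * Nk 2 G & M27 F = 3 ^+ 4 * Nk 2 G].
Proof. exact: (case1 C H chk_d2_121). Qed.

Lemma chk_d2_122 : [&& chk0 d2_122_A d2_122_B d2_122_E, chkU 1 d2_122_A d2_122_B d2_122_E (false, 0%N, [:: ]%N), chkG 3 1 (Z.of_nat 1) (Z.of_nat 2) (Z.of_nat 2) d2_122_A d2_122_B d2_122_E (false, 2%N, [:: 4]%N) & chkU 9 d2_122_A d2_122_B d2_122_E (false, 0%N, [:: 5; 5; 5; 5]%N)] = true.
Proof. vm_compute. reflexivity. Qed.

Lemma P_d2_122 C H : let F := Fp d2_122_A d2_122_B d2_122_E 1 C H in let G := Gp 1 2 2 C H in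
  [/\ F.[1] = 3, Nk 1 F = 3, Nk 3 F = 3, Nk 2 F = 3 * Nk 2 G & M27 F = 3 ^+ 4 * Nk 2 G].
Proof. exact: (case1 C H chk_d2_122). Qed.

Lemma chk_d2_200 : [&& chk0 d2_200_A d2_200_B d2_200_E, chkU 1 d2_200_A d2_200_B d2_200_E (false, 0%N, [:: ]%N), chkG 3 2 (Z.of_nat 2) (Z.of_nat 0) (Z.of_nat 0) d2_200_A d2_200_B d2_200_E (false, 2%N, [:: 7]%N) & chkU 9 d2_200_A d2_200_B d2_200_E (true, 0%N, [:: 2]%N)] = true.
Proof. vm_compute. reflexivity. Qed.

Lemma P_d2_200 C H : let F := Fp d2_200_A d2_200_B d2_200_E 2 C H in let G := Gp 2 0 0 C H in
  [/\ F.[1] = 3, Nk 1 F = 3, Nk 3 F = 3, Nk 2 F = 3 * Nk 2 G & M27 F = 3 ^+ 4 * Nk 2 G].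
Proof. exact: (case1 C H chk_d2_200). Qed.

Lemma chk_d2_201 : [&& chk0 d2_201_A d2_201_B d2_201_E, chkU 1 d2_201_A d2_201_B d2_201_E (false, 0%N, [:: ]%N), chkG 3 2 (Z.of_nat 2) (Z.of_nat 0) (Z.of_nat 1) d2_201_A d2_201_B d2_201_E (false, 2%N, [:: ]%N) & chkU 9 d2_201_A d2_201_B d2_201_E (false, 2%N, [:: ]%N)] = true.
Proof. vm_compute. reflexivity. Qed.

Lemma P_d2_201 C H : let F := Fp d2_201_A d2_201_B d2_201_E 2 C H in let G := Gp 2 0 1 C H in
  [/\ F.[1] = 3, Nk 1 F = 3, Nk 3 F = 3, Nk 2 F = 3 * Nk 2 G & M27 F = 3 ^+ 4 * Nk 2 G].
Proof. exact: (case1 C H chk_d2_201). Qed.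

Lemma chk_d2_202 : [&& chk0 d2_202_A d2_202_B d2_202_E, chkU 1 d2_202_A d2_202_B d2_202_E (false, 0%N, [:: ]%N), chkG 3 2 (Z.of_nat 2) (Z.of_nat 0) (Z.of_nat 2) d2_202_A d2_202_B d2_202_E (false, 2%N, [:: 4]%N) & chkU 9 d2_202_A d2_202_B d2_202_E (false, 2%N, [:: 4]%N)] = true.
Proof. vm_compute. reflexivity. Qed.

Lemma P_d2_202 C H : let F := Fp d2_202_A d2_202_B d2_202_E 2 C H in let G := Gp 2 0 2 C H in
  [/\ F.[1] = 3, Nk 1 F = 3, Nk 3 F = 3, Nk 2 F = 3 * Nk 2 G & M27 F = 3 ^+ 4 * Nk 2 G].
Proof. exact: (case1 C H chk_d2_202). Qed.

Lemma chk_d2_210 : [&& chk0 d2_210_A d2_210_B d2_210_E, chkU 1 d2_210_A d2_210_B d2_210_E (false, 0%N, [:: ]%N), chkG 3 2 (Z.of_nat 2) (Z.of_nat 1) (Z.of_nat 0) d2_210_A d2_210_B d2_210_E (false, 2%N, [:: 7]%N) & chkU 9 d2_210_A d2_210_B d2_210_E (true, 0%N, [:: 2; 4; 4; 4]%N)] = true.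
Proof. vm_compute. reflexivity. Qed.

Lemma P_d2_210 C H : let F := Fp d2_210_A d2_210_B d2_210_E 2 C H in let G := Gp 2 1 0 C H in
  [/\ F.[1] = 3, Nk 1 F = 3, Nk 3 F = 3, Nk 2 F = 3 * Nk 2 G & M27 F = 3 ^+ 4 * Nk 2 G].
Proof. exact: (case1 C H chk_d2_210). Qed.

Lemma chk_d2_211 : [&& chk0 d2_211_A d2_211_B d2_211_E, chkU 1 d2_211_A d2_211_B d2_211_E (false, 0%N, [:: ]%N), chkG 3 2 (Z.of_nat 2) (Z.of_nat 1) (Z.of_nat 1) d2_211_A d2_211_B d2_211_E (false, 2%N, [:: ]%N) & chkU 9 d2_211_A d2_211_B d2_211_E (false, 1%N, [:: 4; 5; 5]%N)] = true.
Proof. vm_compute. reflexivity. Qed.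

Lemma P_d2_211 C H : let F := Fp d2_211_A d2_211_B d2_211_E 2 C H in let G := Gp 2 1 1 C H in
  [/\ F.[1] = 3, Nk 1 F = 3, Nk 3 F = 3, Nk 2 F = 3 * Nk 2 G & M27 F = 3 ^+ 4 * Nk 2 G].
Proof. exact: (case1 C H chk_d2_211). Qed.

Lemma chk_d2_212 : [&& chk0 d2_212_A d2_212_B d2_212_E, chkU 1 d2_212_A d2_212_B d2_212_E (false, 0%N, [:: ]%N), chkG 3 2 (Z.of_nat 2) (Z.of_nat 1) (Z.of_nat 2) d2_212_A d2_212_B d2_212_E (false, 2%N, [:: 4]%N) & chkU 9 d2_212_A d2_212_B d2_212_E (false, 0%N, [:: 5; 5; 5; 5]%N)] = true.
Proof. vm_compute. reflexivity. Qed.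

Lemma P_d2_212 C H : let F := Fp d2_212_A d2_212_B d2_212_E 2 C H in let G := Gp 2 1 2 C H in
  [/\ F.[1] = 3, Nk 1 F = 3, Nk 3 F = 3, Nk 2 F = 3 * Nk 2 G & M27 F = 3 ^+ 4 * Nk 2 G].
Proof. exact: (case1 C H chk_d2_212). Qed.

Lemma chk_d2_220 : [&& chk0 d2_220_A d2_220_B d2_220_E, chkU 1 d2_220_A d2_220_B d2_220_E (false, 0%N, [:: ]%N), chkG 3 2 (Z.of_nat 2) (Z.of_nat 2) (Z.of_nat 0) d2_220_A d2_220_B d2_220_E (false, 2%N, [:: 7]%N) & chkU 9 d2_220_A d2_220_B d2_220_E (true, 0%N, [:: 2; 7; 7; 7]%N)] = true.
Proof. vm_compute. reflexivity. Qed.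

Lemma P_d2_220 C H : let F := Fp d2_220_A d2_220_B d2_220_E 2 C H in let G := Gp 2 2 0 C H in
  [/\ F.[1] = 3, Nk 1 F = 3, Nk 3 F = 3, Nk 2 F = 3 * Nk 2 G & M27 F = 3 ^+ 4 * Nk 2 G].
Proof. exact: (case1 C H chk_d2_220). Qed.

Lemma chk_d2_221 : [&& chk0 d2_221_A d2_221_B d2_221_E, chkU 1 d2_221_A d2_221_B d2_221_E (false, 0%N, [:: ]%N), chkG 3 2 (Z.of_nat 2) (Z.of_nat 2) (Z.of_nat 1) d2_221_A d2_221_B d2_221_E (false, 2%N, [:: ]%N) & chkU 9 d2_221_A d2_221_B d2_221_E (true, 0%N, [:: 2; 7; 7]%N)] = true.
Proof. vm_compute. reflexivity. Qed.

Lemma P_d2_221 C H : let F := Fp d2_221_A d2_221_B d2_221_E 2 C H in let G := Gp 2 2 1 C H in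
  [/\ F.[1] = 3, Nk 1 F = 3, Nk 3 F = 3, Nk 2 F = 3 * Nk 2 G & M27 F = 3 ^+ 4 * Nk 2 G].
Proof. exact: (case1 C H chk_d2_221). Qed.

Lemma chk_d2_222 : [&& chk0 d2_222_A d2_222_B d2_222_E, chkU 1 d2_222_A d2_222_B d2_222_E (false, 0%N, [:: ]%N), chkG 3 2 (Z.of_nat 2) (Z.of_nat 2) (Z.of_nat 2) d2_222_A d2_222_B d2_222_E (false, 2%N, [:: 4]%N) & chkU 9 d2_222_A d2_222_B d2_222_E (false, 0%N, [:: 2; 2; 2; 5]%N)] = true.
Proof. vm_compute. reflexivity. Qed.

Lemma P_d2_222 C H : let F := Fp d2_222_A d2_222_B d2_222_E 2 C H in let G := Gp 2 2 2 C H in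
  [/\ F.[1] = 3, Nk 1 F = 3, Nk 3 F = 3, Nk 2 F = 3 * Nk 2 G & M27 F = 3 ^+ 4 * Nk 2 G].
Proof. exact: (case1 C H chk_d2_222). Qed.

Lemma chk_d3_100 : [&& chk0 d3_100_A d3_100_B d3_100_E, chkU 1 d3_100_A d3_100_B d3_100_E (false, 0%N, [:: ]%N), chkU 3 d3_100_A d3_100_B d3_100_E (true, 0%N, [:: 2]%N) & chkG 9 2 (Z.of_nat 1) (Z.of_nat 0) (Z.of_nat 0) d3_100_A d3_100_B d3_100_E (false, 2%N, [:: 7]%N)] = true.
Proof. vm_compute. reflexivity. Qed.

Lemma P_d3_100 C H : let F := Fp d3_100_A d3_100_B d3_100_E 2 C H in let G := Gp 1 0 0 C H in
  [/\ F.[1] = 3, Nk 1 F = 3, Nk 2 F = 3, Nk 3 F = 3 * Nk 3 G & M27 F = 3 ^+ 4 * Nk 3 G].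
Proof. exact: (case2 C H chk_d3_100). Qed.

Lemma chk_d3_101 : [&& chk0 d3_101_A d3_101_B d3_101_E, chkU 1 d3_101_A d3_101_B d3_101_E (false, 0%N, [:: ]%N), chkU 3 d3_101_A d3_101_B d3_101_E (false, 2%N, [:: 4]%N) & chkG 9 2 (Z.of_nat 1) (Z.of_nat 0) (Z.of_nat 1) d3_101_A d3_101_B d3_101_E (false, 2%N, [:: 4]%N)] = true.
Proof. vm_compute. reflexivity. Qed.

Lemma P_d3_101 C H : let F := Fp d3_101_A d3_101_B d3_101_E 2 C H in let G := Gp 1 0 1 C H in
  [/\ F.[1] = 3, Nk 1 F = 3, Nk 2 F = 3, Nk 3 F = 3 * Nk 3 G & M27 F = 3 ^+ 4 * Nk 3 G].
Proof. exact: (case2 C H chk_d3_101). Qed.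

Lemma chk_d3_102 : [&& chk0 d3_102_A d3_102_B d3_102_E, chkU 1 d3_102_A d3_102_B d3_102_E (false, 0%N, [:: ]%N), chkU 3 d3_102_A d3_102_B d3_102_E (false, 2%N, [:: ]%N) & chkG 9 2 (Z.of_nat 1) (Z.of_nat 0) (Z.of_nat 2) d3_102_A d3_102_B d3_102_E (false, 2%N, [:: ]%N)] = true.
Proof. vm_compute. reflexivity. Qed.

Lemma P_d3_102 C H : let F := Fp d3_102_A d3_102_B d3_102_E 2 C H in let G := Gp 1 0 2 C H in
  [/\ F.[1] = 3, Nk 1 F = 3, Nk 2 F = 3, Nk 3 F = 3 * Nk 3 G & M27 F = 3 ^+ 4 * Nk 3 G].
Proof. exact: (case2 C H chk_d3_102). Qed.

Lemma chk_d3_110 : [&& chk0 d3_110_A d3_110_B d3_110_E, chkU 1 d3_110_A d3_110_B d3_110_E (false, 0%N, [:: ]%N), chkU 3 d3_110_A d3_110_B d3_110_E (true, 0%N, [:: 2; 4; 4; 4]%N) & chkG 9 2 (Z.of_nat 1) (Z.of_nat 1) (Z.of_nat 0) d3_110_A d3_110_B d3_110_E (false, 2%N, [:: 7]%N)] = true.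
Proof. vm_compute. reflexivity. Qed.

Lemma P_d3_110 C H : let F := Fp d3_110_A d3_110_B d3_110_E 2 C H in let G := Gp 1 1 0 C H in
  [/\ F.[1] = 3, Nk 1 F = 3, Nk 2 F = 3, Nk 3 F = 3 * Nk 3 G & M27 F = 3 ^+ 4 * Nk 3 G].
Proof. exact: (case2 C H chk_d3_110). Qed.

Lemma chk_d3_111 : [&& chk0 d3_111_A d3_111_B d3_111_E, chkU 1 d3_111_A d3_111_B d3_111_E (false, 0%N, [:: ]%N), chkU 3 d3_111_A d3_111_B d3_111_E (false, 2%N, [:: 4; 4; 4; 4]%N) & chkG 9 2 (Z.of_nat 1) (Z.of_nat 1) (Z.of_nat 1) d3_111_A d3_111_B d3_111_E (false, 2%N, [:: 4]%N)] = true.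
Proof. vm_compute. reflexivity. Qed.

Lemma P_d3_111 C H : let F := Fp d3_111_A d3_111_B d3_111_E 2 C H in let G := Gp 1 1 1 C H in
  [/\ F.[1] = 3, Nk 1 F = 3, Nk 2 F = 3, Nk 3 F = 3 * Nk 3 G & M27 F = 3 ^+ 4 * Nk 3 G].
Proof. exact: (case2 C H chk_d3_111). Qed.

Lemma chk_d3_112 : [&& chk0 d3_112_A d3_112_B d3_112_E, chkU 1 d3_112_A d3_112_B d3_112_E (false, 0%N, [:: ]%N), chkU 3 d3_112_A d3_112_B d3_112_E (false, 2%N, [:: 4; 4; 4]%N) & chkG 9 2 (Z.of_nat 1) (Z.of_nat 1) (Z.of_nat 2) d3_112_A d3_112_B d3_112_E (false, 2%N, [:: ]%N)] = true.
Proof. vm_compute. reflexivity. Qed.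

Lemma P_d3_112 C H : let F := Fp d3_112_A d3_112_B d3_112_E 2 C H in let G := Gp 1 1 2 C H in
  [/\ F.[1] = 3, Nk 1 F = 3, Nk 2 F = 3, Nk 3 F = 3 * Nk 3 G & M27 F = 3 ^+ 4 * Nk 3 G].
Proof. exact: (case2 C H chk_d3_112). Qed.

Lemma chk_d3_120 : [&& chk0 d3_120_A d3_120_B d3_120_E, chkU 1 d3_120_A d3_120_B d3_120_E (false, 0%N, [:: ]%N), chkU 3 d3_120_A d3_120_B d3_120_E (false, 3%N, [:: 2; 2; 2; 2]%N) & chkG 9 2 (Z.of_nat 1) (Z.of_nat 2) (Z.of_nat 0) d3_120_A d3_120_B d3_120_E (false, 2%N, [:: 7]%N)] = true.
Proof. vm_compute. reflexivity. Qed.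

Lemma P_d3_120 C H : let F := Fp d3_120_A d3_120_B d3_120_E 2 C H in let G := Gp 1 2 0 C H in
  [/\ F.[1] = 3, Nk 1 F = 3, Nk 2 F = 3, Nk 3 F = 3 * Nk 3 G & M27 F = 3 ^+ 4 * Nk 3 G].
Proof. exact: (case2 C H chk_d3_120). Qed.

Lemma chk_d3_121 : [&& chk0 d3_121_A d3_121_B d3_121_E, chkU 1 d3_121_A d3_121_B d3_121_E (false, 0%N, [:: ]%N), chkU 3 d3_121_A d3_121_B d3_121_E (false, 2%N, [:: 4; 4; 4; 4; 4; 4; 4]%N) & chkG 9 2 (Z.of_nat 1) (Z.of_nat 2) (Z.of_nat 1) d3_121_A d3_121_B d3_121_E (false, 2%N, [:: 4]%N)] = true.
Proof. vm_compute. reflexivity. Qed.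

Lemma P_d3_121 C H : let F := Fp d3_121_A d3_121_B d3_121_E 2 C H in let G := Gp 1 2 1 C H in
  [/\ F.[1] = 3, Nk 1 F = 3, Nk 2 F = 3, Nk 3 F = 3 * Nk 3 G & M27 F = 3 ^+ 4 * Nk 3 G].
Proof. exact: (case2 C H chk_d3_121). Qed.

Lemma chk_d3_122 : [&& chk0 d3_122_A d3_122_B d3_122_E, chkU 1 d3_122_A d3_122_B d3_122_E (false, 0%N, [:: ]%N), chkU 3 d3_122_A d3_122_B d3_122_E (false, 2%N, [:: 4; 4; 4; 4; 4; 4]%N) & chkG 9 2 (Z.of_nat 1) (Z.of_nat 2) (Z.of_nat 2) d3_122_A d3_122_B d3_122_E (false, 2%N, [:: ]%N)] = true.
Proof. vm_compute. reflexivity. Qed.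

Lemma P_d3_122 C H : let F := Fp d3_122_A d3_122_B d3_122_E 2 C H in let G := Gp 1 2 2 C H in
  [/\ F.[1] = 3, Nk 1 F = 3, Nk 2 F = 3, Nk 3 F = 3 * Nk 3 G & M27 F = 3 ^+ 4 * Nk 3 G].
Proof. exact: (case2 C H chk_d3_122). Qed.

Lemma chk_d3_200 : [&& chk0 d3_200_A d3_200_B d3_200_E, chkU 1 d3_200_A d3_200_B d3_200_E (false, 0%N, [:: ]%N), chkU 3 d3_200_A d3_200_B d3_200_E (false, 2%N, [:: 4; 4; 4]%N) & chkG 9 1 (Z.of_nat 2) (Z.of_nat 0) (Z.of_nat 0) d3_200_A d3_200_B d3_200_E (false, 2%N, [:: ]%N)] = true.
Proof. vm_compute. reflexivity. Qed.

Lemma P_d3_200 C H : let F := Fp d3_200_A d3_200_B d3_200_E 1 C H in let G := Gp 2 0 0 C H in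
  [/\ F.[1] = 3, Nk 1 F = 3, Nk 2 F = 3, Nk 3 F = 3 * Nk 3 G & M27 F = 3 ^+ 4 * Nk 3 G].
Proof. exact: (case2 C H chk_d3_200). Qed.

Lemma chk_d3_201 : [&& chk0 d3_201_A d3_201_B d3_201_E, chkU 1 d3_201_A d3_201_B d3_201_E (false, 0%N, [:: ]%N), chkU 3 d3_201_A d3_201_B d3_201_E (false, 2%N, [:: 4; 4; 4; 4]%N) & chkG 9 1 (Z.of_nat 2) (Z.of_nat 0) (Z.of_nat 1) d3_201_A d3_201_B d3_201_E (false, 2%N, [:: 4]%N)] = true.
Proof. vm_compute. reflexivity. Qed.

Lemma P_d3_201 C H : let F := Fp d3_201_A d3_201_B d3_201_E 1 C H in let G := Gp 2 0 1 C H in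
  [/\ F.[1] = 3, Nk 1 F = 3, Nk 2 F = 3, Nk 3 F = 3 * Nk 3 G & M27 F = 3 ^+ 4 * Nk 3 G].
Proof. exact: (case2 C H chk_d3_201). Qed.

Lemma chk_d3_202 : [&& chk0 d3_202_A d3_202_B d3_202_E, chkU 1 d3_202_A d3_202_B d3_202_E (false, 0%N, [:: ]%N), chkU 3 d3_202_A d3_202_B d3_202_E (true, 0%N, [:: 2; 4; 4; 4]%N) & chkG 9 1 (Z.of_nat 2) (Z.of_nat 0) (Z.of_nat 2) d3_202_A d3_202_B d3_202_E (false, 2%N, [:: 7]%N)] = true.
Proof. vm_compute. reflexivity. Qed.

Lemma P_d3_202 C H : let F := Fp d3_202_A d3_202_B d3_202_E 1 C H in let G := Gp 2 0 2 C H in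
  [/\ F.[1] = 3, Nk 1 F = 3, Nk 2 F = 3, Nk 3 F = 3 * Nk 3 G & M27 F = 3 ^+ 4 * Nk 3 G].
Proof. exact: (case2 C H chk_d3_202). Qed.

Lemma chk_d3_210 : [&& chk0 d3_210_A d3_210_B d3_210_E, chkU 1 d3_210_A d3_210_B d3_210_E (false, 0%N, [:: ]%N), chkU 3 d3_210_A d3_210_B d3_210_E (false, 2%N, [:: 4; 4; 4; 4; 4; 4]%N) & chkG 9 1 (Z.of_nat 2) (Z.of_nat 1) (Z.of_nat 0) d3_210_A d3_210_B d3_210_E (false, 2%N, [:: ]%N)] = true.
Proof. vm_compute. reflexivity. Qed.

Lemma P_d3_210 C H : let F := Fp d3_210_A d3_210_B d3_210_E 1 C H in let G := Gp 2 1 0 C H in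
  [/\ F.[1] = 3, Nk 1 F = 3, Nk 2 F = 3, Nk 3 F = 3 * Nk 3 G & M27 F = 3 ^+ 4 * Nk 3 G].
Proof. exact: (case2 C H chk_d3_210). Qed.

Lemma chk_d3_211 : [&& chk0 d3_211_A d3_211_B d3_211_E, chkU 1 d3_211_A d3_211_B d3_211_E (false, 0%N, [:: ]%N), chkU 3 d3_211_A d3_211_B d3_211_E (false, 2%N, [:: 4; 4; 4; 4; 4; 4; 4]%N) & chkG 9 1 (Z.of_nat 2) (Z.of_nat 1) (Z.of_nat 1) d3_211_A d3_211_B d3_211_E (false, 2%N, [:: 4]%N)] = true.
Proof. vm_compute. reflexivity. Qed.

Lemma P_d3_211 C H : let F := Fp d3_211_A d3_211_B d3_211_E 1 C H in let G := Gp 2 1 1 C H in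
  [/\ F.[1] = 3, Nk 1 F = 3, Nk 2 F = 3, Nk 3 F = 3 * Nk 3 G & M27 F = 3 ^+ 4 * Nk 3 G].
Proof. exact: (case2 C H chk_d3_211). Qed.

Lemma chk_d3_212 : [&& chk0 d3_212_A d3_212_B d3_212_E, chkU 1 d3_212_A d3_212_B d3_212_E (false, 0%N, [:: ]%N), chkU 3 d3_212_A d3_212_B d3_212_E (false, 3%N, [:: 2; 2; 2; 2]%N) & chkG 9 1 (Z.of_nat 2) (Z.of_nat 1) (Z.of_nat 2) d3_212_A d3_212_B d3_212_E (false, 2%N, [:: 7]%N)] = true.
Proof. vm_compute. reflexivity. Qed.

Lemma P_d3_212 C H : let F := Fp d3_212_A d3_212_B d3_212_E 1 C H in let G := Gp 2 1 2 C H in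
  [/\ F.[1] = 3, Nk 1 F = 3, Nk 2 F = 3, Nk 3 F = 3 * Nk 3 G & M27 F = 3 ^+ 4 * Nk 3 G].
Proof. exact: (case2 C H chk_d3_212). Qed.

Lemma chk_d3_220 : [&& chk0 d3_220_A d3_220_B d3_220_E, chkU 1 d3_220_A d3_220_B d3_220_E (false, 0%N, [:: ]%N), chkU 3 d3_220_A d3_220_B d3_220_E (false, 2%N, [:: ]%N) & chkG 9 1 (Z.of_nat 2) (Z.of_nat 2) (Z.of_nat 0) d3_220_A d3_220_B d3_220_E (false, 2%N, [:: ]%N)] = true.
Proof. vm_compute. reflexivity. Qed.

Lemma P_d3_220 C H : let F := Fp d3_220_A d3_220_B d3_220_E 1 C H in let G := Gp 2 2 0 C H in
  [/\ F.[1] = 3, Nk 1 F = 3, Nk 2 F = 3, Nk 3 F = 3 * Nk 3 G & M27 F = 3 ^+ 4 * Nk 3 G].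
Proof. exact: (case2 C H chk_d3_220). Qed.

Lemma chk_d3_221 : [&& chk0 d3_221_A d3_221_B d3_221_E, chkU 1 d3_221_A d3_221_B d3_221_E (false, 0%N, [:: ]%N), chkU 3 d3_221_A d3_221_B d3_221_E (false, 2%N, [:: 4]%N) & chkG 9 1 (Z.of_nat 2) (Z.of_nat 2) (Z.of_nat 1) d3_221_A d3_221_B d3_221_E (false, 2%N, [:: 4]%N)] = true.
Proof. vm_compute. reflexivity. Qed.

Lemma P_d3_221 C H : let F := Fp d3_221_A d3_221_B d3_221_E 1 C H in let G := Gp 2 2 1 C H in
  [/\ F.[1] = 3, Nk 1 F = 3, Nk 2 F = 3, Nk 3 F = 3 * Nk 3 G & M27 F = 3 ^+ 4 * Nk 3 G].
Proof. exact: (case2 C H chk_d3_221). Qed.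

Lemma chk_d3_222 : [&& chk0 d3_222_A d3_222_B d3_222_E, chkU 1 d3_222_A d3_222_B d3_222_E (false, 0%N, [:: ]%N), chkU 3 d3_222_A d3_222_B d3_222_E (true, 0%N, [:: 2]%N) & chkG 9 1 (Z.of_nat 2) (Z.of_nat 2) (Z.of_nat 2) d3_222_A d3_222_B d3_222_E (false, 2%N, [:: 7]%N)] = true.
Proof. vm_compute. reflexivity. Qed.

Lemma P_d3_222 C H : let F := Fp d3_222_A d3_222_B d3_222_E 1 C H in let G := Gp 2 2 2 C H in
  [/\ F.[1] = 3, Nk 1 F = 3, Nk 2 F = 3, Nk 3 F = 3 * Nk 3 G & M27 F = 3 ^+ 4 * Nk 3 G].
Proof. exact: (case2 C H chk_d3_222). Qed.

Theorem lemma4p5 (m : int) :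
  ((exists h : {poly int}, ~~ (3 %| h.[1])%Z /\
      m%:~R = Nk 2 (1 + ('X - 1) ^+ 5 * h)) ->
    exists F : {poly int},
      [/\ F.[1] = 3, Nk 1 F = 3, Nk 3 F = 3,
          Nk 2 F = 3 * m%:~R & M27 F = 3 ^+ 4 * m%:~R])
  /\
  ((exists h : {poly int}, ~~ (3 %| h.[1])%Z /\
      m%:~R = Nk 3 (1 + ('X - 1) ^+ 5 * h)) ->
    exists F : {poly int},
      [/\ F.[1] = 3, Nk 1 F = 3, Nk 2 F = 3,
          Nk 3 F = 3 * m%:~R & M27 F = 3 ^+ 4 * m%:~R]).
Proof.
split; case=> h [hd hm]; have [r0 [r1 [r2 [C [H [hr0 hr1 hr2 eh]]]]]] := hdecomp hd;
  rewrite hm eh; case: hr0 => ->; case: hr1 => [->|[->|->]]; case: hr2 => [->|[->|->]].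
- by exists (Fp d2_100_A d2_100_B d2_100_E 1 C H); exact: (P_d2_100 C H).
- by exists (Fp d2_101_A d2_101_B d2_101_E 1 C H); exact: (P_d2_101 C H).
- by exists (Fp d2_102_A d2_102_B d2_102_E 1 C H); exact: (P_d2_102 C H).
- by exists (Fp d2_110_A d2_110_B d2_110_E 1 C H); exact: (P_d2_110 C H).
- by exists (Fp d2_111_A d2_111_B d2_111_E 1 C H); exact: (P_d2_111 C H).
- by exists (Fp d2_112_A d2_112_B d2_112_E 1 C H); exact: (P_d2_112 C H).
- by exists (Fp d2_120_A d2_120_B d2_120_E 1 C H); exact: (P_d2_120 C H).
- by exists (Fp d2_121_A d2_121_B d2_121_E 1 C H); exact: (P_d2_121 C H).
- by exists (Fp d2_122_A d2_122_B d2_122_E 1 C H); exact: (P_d2_122 C H).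
- by exists (Fp d2_200_A d2_200_B d2_200_E 2 C H); exact: (P_d2_200 C H).
- by exists (Fp d2_201_A d2_201_B d2_201_E 2 C H); exact: (P_d2_201 C H).
- by exists (Fp d2_202_A d2_202_B d2_202_E 2 C H); exact: (P_d2_202 C H).
- by exists (Fp d2_210_A d2_210_B d2_210_E 2 C H); exact: (P_d2_210 C H).
- by exists (Fp d2_211_A d2_211_B d2_211_E 2 C H); exact: (P_d2_211 C H).
- by exists (Fp d2_212_A d2_212_B d2_212_E 2 C H); exact: (P_d2_212 C H).
- by exists (Fp d2_220_A d2_220_B d2_220_E 2 C H); exact: (P_d2_220 C H).
- by exists (Fp d2_221_A d2_221_B d2_221_E 2 C H); exact: (P_d2_221 C H).
- by exists (Fp d2_222_A d2_222_B d2_222_E 2 C H); exact: (P_d2_222 C H).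
- by exists (Fp d3_100_A d3_100_B d3_100_E 2 C H); exact: (P_d3_100 C H).
- by exists (Fp d3_101_A d3_101_B d3_101_E 2 C H); exact: (P_d3_101 C H).
- by exists (Fp d3_102_A d3_102_B d3_102_E 2 C H); exact: (P_d3_102 C H).
- by exists (Fp d3_110_A d3_110_B d3_110_E 2 C H); exact: (P_d3_110 C H).
- by exists (Fp d3_111_A d3_111_B d3_111_E 2 C H); exact: (P_d3_111 C H).
- by exists (Fp d3_112_A d3_112_B d3_112_E 2 C H); exact: (P_d3_112 C H).
- by exists (Fp d3_120_A d3_120_B d3_120_E 2 C H); exact: (P_d3_120 C H).
- by exists (Fp d3_121_A d3_121_B d3_121_E 2 C H); exact: (P_d3_121 C H).
- by exists (Fp d3_122_A d3_122_B d3_122_E 2 C H); exact: (P_d3_122 C H).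
- by exists (Fp d3_200_A d3_200_B d3_200_E 1 C H); exact: (P_d3_200 C H).
- by exists (Fp d3_201_A d3_201_B d3_201_E 1 C H); exact: (P_d3_201 C H).
- by exists (Fp d3_202_A d3_202_B d3_202_E 1 C H); exact: (P_d3_202 C H).
- by exists (Fp d3_210_A d3_210_B d3_210_E 1 C H); exact: (P_d3_210 C H).
- by exists (Fp d3_211_A d3_211_B d3_211_E 1 C H); exact: (P_d3_211 C H).
- by exists (Fp d3_212_A d3_212_B d3_212_E 1 C H); exact: (P_d3_212 C H).
- by exists (Fp d3_220_A d3_220_B d3_220_E 1 C H); exact: (P_d3_220 C H).
- by exists (Fp d3_221_A d3_221_B d3_221_E 1 C H); exact: (P_d3_221 C H).
- by exists (Fp d3_222_A d3_222_B d3_222_E 1 C H); exact: (P_d3_222 C H).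
Qed.
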